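(* Let $T>0$ and let $\omega\in\mathbf{R}$, $\omega\neq 0$, be such that $e^{2i\omega T}\neq 1$. Then for any $a\in H^1$ and $g\in H^2$ there exists a unique solution $u\in\mathcal{W}^1_\infty$ of the boundary value problem $$\frac{d^2u}{dt^2}(t)=Au(t),\ t\in(0,T),\qquad u(0)=a,\qquad \int_0^T e^{i\omega t}u(t)\,dt=g .$$ Moreover, there exists $c>0$ depending only on $A$ (together with its boundary conditions, i.e. the eigen-system $\{\lambda_k,v_k\}$), $T$ and $\omega$ such that $$\|u\|_{\mathcal{W}^1_\infty}\le c\left(\|a\|_{H^1}+\|g\|_{H^2}\right)\qquad\forall a\in H^1,\ g\in H^2 .$$
   Context: Let $\mathrm{D}\subset\mathbf{R}^n$ be a domain and $H=L_2(\mathrm{D};\mathbf{C})$ (complex-valued square integrable functions) with inner product $(\cdot,\cdot)_H$. $A$ is a self-adjoint operator on $H$ (with boundary conditions encoded by a dense subset $H_{BC}\subset H$) mapping real-valued functions to real-valued functions, and there is an orthonormal basis $\{v_k\}_{k\ge1}$ of $H$ consisting of eigenfunctions, $Av_k=-\lambda_k v_k$, with $\lambda_k\in(0,+\infty)$ and $\lambda_k\to+\infty$. For $q=-1,0,1,2$, $H^q$ is the completion (closure of $H_{BC}\cap D(A)$) with respect to the norm $\|u\|_{H^q}=\big(\sum_{k\ge1}\lambda_k^q|(u,v_k)_H|^2\big)^{1/2}$; $H^0=H$. For $r\in[1,\infty]$, $\mathcal{C}^q=C([0,T];H^q)$, $\mathcal{L}^q_r=L_r([0,T];H^q)$ (Lebesgue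 measure), and $\mathcal{W}^1_r=\{u\in\mathcal{C}^0\cap\mathcal{L}^1_r:\ du/dt\in\mathcal{C}^0\}$ with norm $\|u\|_{\mathcal{W}^1_r}=\|u\|_{\mathcal{C}^0}+\|u\|_{\mathcal{L}^1_r}+\|du/dt\|_{\mathcal{C}^0}$. A function $u\in\mathcal{W}^1_1$ is said to satisfy $\frac{d^2u}{dt^2}=Au$ if $\frac{du}{dt}(t)-\frac{du}{dt}(s)=\int_s^tAu(r)\,dr$ holds in $H^{-1}$ for all $0\le s\le t\le T$; the conditions $u(0)=a$ and $\int_0^Te^{i\omega t}u(t)dt=g$ are required as equalities in $H$. *)

(* Defs.v *)
From Stdlib Require Import Reals Lra ClassicalEpsilon.
Open Scope R_scope.

Record Cplx := mkC { Cre : R ; Cim : R }.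
Definition Cadd (z w : Cplx) : Cplx := mkC (Cre z + Cre w) (Cim z + Cim w).
Definition Csub (z w : Cplx) : Cplx := mkC (Cre z - Cre w) (Cim z - Cim w).
Definition Cmul (z w : Cplx) : Cplx :=
  mkC (Cre z * Cre w - Cim z * Cim w) (Cre z * Cim w + Cim z * Cre w).
Definition CscaleR (r : R) (z : Cplx) : Cplx := mkC (r * Cre z) (r * Cim z).
Definition Cone : Cplx := mkC 1 0.
Definition Cmod2 (z : Cplx) : R := Cre z ^ 2 + Cim z ^ 2.
Definition Cexpi (theta : R) : Cplx := mkC (cos theta) (sin theta).

(* ---------- the abstract spectral setting ----------
   An element u of H (or of H^{-1}, H^1, H^2) is represented by its sequence of
   Fourier coefficients k |-> (u, v_{k+1})_H  (index shifted: k : nat starts at 0).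
   lam k is the eigenvalue lambda_{k+1}. *)
Definition Hseq := nat -> Cplx.

Definition seq_sub (x y : Hseq) : Hseq := fun k => Csub (x k) (y k).
Definition seq_scale (r : R) (x : Hseq) : Hseq := fun k => CscaleR r (x k).

Definition Hq_terms (lam : nat -> R) (q : Z) (x : Hseq) : nat -> R :=
  fun k => powerRZ (lam k) q * Cmod2 (x k).

Definition inHq (lam : nat -> R) (q : Z) (x : Hseq) : Prop :=
  exists l, infinite_sum (Hq_terms lam q x) l.

(* ||x||_{H^q} = sqrt (sum_k lambda_k^q |x_k|^2)  (meaningful when inHq holds) *)
Definition Hnorm (lam : nat -> R) (q : Z) (x : Hseq) : R :=
  sqrt (epsilon (inhabits 0) (fun l => infinite_sum (Hq_terms lam q x) l)).

Definition cont_Hq (lam : nat -> R) (q : Z) (T : R) (u : R -> Hseq) : Prop :=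
  (forall t, 0 <= t <= T -> inHq lam q (u t)) /\
  (forall t, 0 <= t <= T -> forall eps, 0 < eps ->
     exists delta, 0 < delta /\
       forall s, 0 <= s <= T -> Rabs (s - t) < delta ->
         Hnorm lam q (seq_sub (u s) (u t)) < eps).

Definition deriv_H (lam : nat -> R) (T : R) (u v : R -> Hseq) : Prop :=
  forall t, 0 <= t <= T -> forall eps, 0 < eps ->
    exists delta, 0 < delta /\
      forall s, 0 <= s <= T -> s <> t -> Rabs (s - t) < delta ->
        Hnorm lam 0 (seq_sub (seq_scale (/ (s - t)) (seq_sub (u s) (u t))) (v t))
          < eps.

(* u belongs to W^1_infty with du/dt = v:
   u in C([0,T];H), u in L_infty([0,T];H^1), du/dt = v in C([0,T];H).
   (For u continuous into H, membership in L_infty(H^1) amounts to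
   u(t) in H^1 for all t with sup_t ||u(t)||_{H^1} < infinity.) *)
Definition inW1inf (lam : nat -> R) (T : R) (u v : R -> Hseq) : Prop :=
  cont_Hq lam 0 T u /\
  (forall t, 0 <= t <= T -> inHq lam 1 (u t)) /\
  (exists M, forall t, 0 <= t <= T -> Hnorm lam 1 (u t) <= M) /\
  deriv_H lam T u v /\
  cont_Hq lam 0 T v.

Definition RInt_eq (f : R -> R) (a b l : R) : Prop :=
  exists pr : Riemann_integrable f a b, RiemannInt pr = l.

Definition CInt_eq (f : R -> Cplx) (a b : R) (z : Cplx) : Prop :=
  RInt_eq (fun r => Cre (f r)) a b (Cre z) /\
  RInt_eq (fun r => Cim (f r)) a b (Cim z).

(* d^2u/dt^2 = Au in the integrated sense, in H^{-1}:
   du/dt(t) - du/dt(s) = int_s^t A u(r) dr, written coefficientwise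
   (A acts by (Au)_k = - lambda_k u_k). *)
Definition wave_eq (lam : nat -> R) (T : R) (u v : R -> Hseq) : Prop :=
  forall s t, 0 <= s -> s <= t -> t <= T -> forall k,
    CInt_eq (fun r => CscaleR (- lam k) (u r k)) s t (Csub (v t k) (v s k)).

Definition bc_init (u : R -> Hseq) (a : Hseq) : Prop := forall k, u 0 k = a k.
Definition bc_int (omega T : R) (u : R -> Hseq) (g : Hseq) : Prop :=
  forall k, CInt_eq (fun t => Cmul (Cexpi (omega * t)) (u t k)) 0 T (g k).

Definition is_solution (lam : nat -> R) (T omega : R) (a g : Hseq)
  (u v : R -> Hseq) : Prop :=
  inW1inf lam T u v /\ wave_eq lam T u v /\ bc_init u a /\ bc_int omega T u g.

(* Main.v *)
From Coquelicot Require Import Coquelicot.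
Require Import Defs.
From Stdlib Require Import Reals Lra Lia Psatz ClassicalEpsilon FunctionalExtensionality.
Open Scope R_scope.

Lemma Hnorm_eq lam q x l : infinite_sum (Hq_terms lam q x) l -> Hnorm lam q x = sqrt l.
Proof.
  intro H. unfold Hnorm.
  pose proof (epsilon_spec (inhabits 0) (fun l => infinite_sum (Hq_terms lam q x) l)
     (ex_intro _ l H)) as H2.
  f_equal. eapply uniqueness_sum; eauto.
Qed.

Lemma Un_cv_const c : Un_cv (fun _ : nat => c) c.
Proof. intros e He. exists 0%nat. intros. unfold R_dist. rewrite Rminus_diag, Rabs_R0. lra. Qed.

Lemma series_comp (c B : nat -> R) L :
  (forall k, 0 <= c k <= B k) -> infinite_sum B L ->
  exists l, infinite_sum c l /\ 0 <= l <= L.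
Proof.
  intros Hc HB.
  destruct (Rseries_CV_comp c B Hc (exist _ L HB)) as [l Hl].
  exists l. split; [exact Hl|]. split.
  - apply Rle_trans with (sum_f_R0 c 0). simpl. apply Hc.
    apply sum_incr; auto. intro n; apply Hc.
  - eapply Rle_cv_lim; [|exact Hl|exact HB].
    intro n. apply sum_Rle. intros; apply Hc.
Qed.

Lemma series_plus a b la lb : infinite_sum a la -> infinite_sum b lb ->
  infinite_sum (fun k => a k + b k) (la + lb).
Proof.
  intros Ha Hb. apply is_series_Reals. apply is_series_Reals in Ha, Hb.
  apply (is_series_plus a b la lb Ha Hb).
Qed.

Lemma series_scal r a la : infinite_sum a la -> infinite_sum (fun k => r * a k) (r * la).
Proof.
  intros Ha. apply is_series_Reals. apply is_series_Reals in Ha.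
  apply (is_series_scal r a la Ha).
Qed.

Lemma term_le_sum c l k : infinite_sum c l -> (forall n, 0 <= c n) -> c k <= l.
Proof.
  intros H Hp. apply Rle_trans with (sum_f_R0 c k).
  - destruct k; simpl. lra. pose proof (cond_pos_sum c k Hp). lra.
  - apply sum_incr; auto.
Qed.

Lemma sum_diff_le (c B : nat -> R) N : (forall k, c k <= B k) ->
  forall m, (N <= m)%nat -> sum_f_R0 c m - sum_f_R0 c N <= sum_f_R0 B m - sum_f_R0 B N.
Proof.
  intros H m. induction m; intro Hm.
  - assert (N = 0%nat) by lia. subst. lra.
  - destruct (Nat.eq_dec N (S m)) as [->|Hne]. lra.
    assert (N <= m)%nat by lia. specialize (IHm H0). simpl. specialize (H (S m)). lra.
Qed.

Lemma head_small (c : R -> nat -> R) t (D : R -> Prop) :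
  (forall k eps, 0 < eps -> exists delta, 0 < delta /\
     forall s, D s -> Rabs (s - t) < delta -> c s k < eps) ->
  forall n eps, 0 < eps -> exists delta, 0 < delta /\
     forall s, D s -> Rabs (s - t) < delta -> sum_f_R0 (c s) n < eps.
Proof.
  intros Hp n. induction n; intros eps He.
  - destruct (Hp 0%nat eps He) as [d [Hd H]]. exists d; split; auto.
  - destruct (IHn (eps/2)) as [d1 [Hd1 H1]]. lra.
    destruct (Hp (S n) (eps/2)) as [d2 [Hd2 H2]]. lra.
    exists (Rmin d1 d2). split. apply Rmin_pos; auto.
    intros s Hs Hst. simpl.
    assert (Rabs (s - t) < d1) by (eapply Rlt_le_trans; [exact Hst| apply Rmin_l]).
    assert (Rabs (s - t) < d2) by (eapply Rlt_le_trans; [exact Hst| apply Rmin_r]).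
    specialize (H1 s Hs H). specialize (H2 s Hs H0). lra.
Qed.

Lemma series_small (c : R -> nat -> R) (B : nat -> R) L t (D : R -> Prop) :
  (forall s k, D s -> 0 <= c s k <= B k) -> (forall k, 0 <= B k) -> infinite_sum B L ->
  (forall k eps, 0 < eps -> exists delta, 0 < delta /\
     forall s, D s -> Rabs (s - t) < delta -> c s k < eps) ->
  forall eps, 0 < eps -> exists delta, 0 < delta /\
     forall s, D s -> Rabs (s - t) < delta -> forall l, infinite_sum (c s) l -> l < eps.
Proof.
  intros Hc HB0 HB Hp eps He.
  destruct (HB (eps/3)) as [N HN]. lra.
  destruct (head_small c t D Hp N (eps/3)) as [d [Hd Hh]]. lra.
  exists d. split; auto. intros s Hs Hst l Hl.
  assert (Hle : forall m, sum_f_R0 (c s) m <= 2*eps/3).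
  { intro m. specialize (Hh s Hs Hst).
    destruct (Compare_dec.le_lt_dec N m) as [Hm|Hm].
    - pose proof (sum_diff_le (c s) B N (fun k => proj2 (Hc s k Hs)) m Hm).
      pose proof (sum_incr B m L HB HB0).
      specialize (HN N (le_n N)). unfold R_dist in HN.
      apply Rabs_def2 in HN. lra.
    - assert (sum_f_R0 (c s) m <= sum_f_R0 (c s) N).
      { pose proof (sum_diff_le (fun _ => 0) (c s) m (fun k => proj1 (Hc s k Hs)) N ltac:(lia)).
        assert (forall p, sum_f_R0 (fun _ : nat => 0) p = 0).
        { induction p; simpl; lra. }
        rewrite !H0 in H. lra. }
      lra. }
  assert (l <= 2*eps/3).
  { eapply Rle_cv_lim; [exact Hle| exact Hl| apply Un_cv_const]. }
  lra.
Qed.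

Lemma Hq0 lam x : Hq_terms lam 0 x = fun k => Cmod2 (x k).
Proof. apply functional_extensionality; intro k. unfold Hq_terms. simpl. ring. Qed.
Lemma Hq1 lam x : Hq_terms lam 1 x = fun k => lam k * Cmod2 (x k).
Proof. apply functional_extensionality; intro k. unfold Hq_terms. simpl. ring. Qed.
Lemma Hq2 lam x : Hq_terms lam 2 x = fun k => lam k ^ 2 * Cmod2 (x k).
Proof. apply functional_extensionality; intro k. unfold Hq_terms. simpl. ring. Qed.

Lemma Cmod2_ge0 z : 0 <= Cmod2 z.
Proof. unfold Cmod2. nra. Qed.

Lemma Cmod2_sub z w : Cmod2 (Csub z w) <= 2 * Cmod2 z + 2 * Cmod2 w.
Proof. destruct z as [a b], w as [c d]; unfold Cmod2, Csub; cbn [Cre Cim].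
  pose proof (pow2_ge_0 (a+c)); pose proof (pow2_ge_0 (b+d)). nra. Qed.

Lemma Cmod2_scale r z : Cmod2 (CscaleR r z) = r^2 * Cmod2 z.
Proof. destruct z as [a b]; unfold Cmod2, CscaleR; cbn [Cre Cim]. ring. Qed.

Lemma Cmod2_comb p q a b : Cmod2 (Cadd (CscaleR p a) (CscaleR q b)) <= 2 * (p^2 * Cmod2 a + q^2 * Cmod2 b).
Proof. destruct a as [a1 a2], b as [b1 b2]; unfold Cmod2, Cadd, CscaleR; cbn [Cre Cim].
  pose proof (pow2_ge_0 (p*a1-q*b1)); pose proof (pow2_ge_0 (p*a2-q*b2)). nra. Qed.

Lemma Cmod2_comb' p q a b : Cmod2 (Cadd (CscaleR p a) (CscaleR q b)) <= (p^2 + q^2) * (Cmod2 a + Cmod2 b).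
Proof. destruct a as [a1 a2], b as [b1 b2]; unfold Cmod2, Cadd, CscaleR; cbn [Cre Cim].
  pose proof (pow2_ge_0 (p*b1-q*a1)); pose proof (pow2_ge_0 (p*b2-q*a2));
  pose proof (pow2_ge_0 (p*a2)); pose proof (pow2_ge_0 (q*b2)); pose proof (pow2_ge_0 (p*a1)); pose proof (pow2_ge_0 (q*b1));
  pose proof (pow2_ge_0 (q*a2)); pose proof (pow2_ge_0 (p*b2)); pose proof (pow2_ge_0 (q*a1)); pose proof (pow2_ge_0 (p*b1)). nra. Qed.

Lemma Cre_le z : Rabs (Cre z) <= sqrt (Cmod2 z).
Proof. destruct z as [x y]; unfold Cmod2; cbn [Cre Cim]. rewrite <- sqrt_Rsqr_abs. apply sqrt_le_1_alt. unfold Rsqr. nra. Qed.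
Lemma Cim_le z : Rabs (Cim z) <= sqrt (Cmod2 z).
Proof. destruct z as [x y]; unfold Cmod2; cbn [Cre Cim]. rewrite <- sqrt_Rsqr_abs. apply sqrt_le_1_alt. unfold Rsqr. nra. Qed.

Lemma inH_sub lam x y : inHq lam 0 x -> inHq lam 0 y -> inHq lam 0 (seq_sub x y).
Proof.
  intros [lx Hx] [ly Hy]. rewrite Hq0 in *.
  destruct (series_comp (fun k => Cmod2 (seq_sub x y k)) (fun k => 2 * Cmod2 (x k) + 2 * Cmod2 (y k))
     (2*lx + 2*ly)) as [l [Hl _]].
  - intro k; split. apply Cmod2_ge0. apply Cmod2_sub.
  - apply series_plus; apply series_scal; auto.
  - exists l. rewrite Hq0. exact Hl.
Qed.

Lemma inH_scale lam r x : inHq lam 0 x -> inHq lam 0 (seq_scale r x).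
Proof.
  intros [lx Hx]. rewrite Hq0 in *. exists (r^2 * lx). rewrite Hq0.
  unfold seq_scale. replace (fun k => Cmod2 (CscaleR r (x k))) with (fun k => r^2 * Cmod2 (x k)).
  apply series_scal; auto. apply functional_extensionality; intro; rewrite Cmod2_scale; auto.
Qed.

Lemma coef_le_Hnorm lam x k : inHq lam 0 x -> sqrt (Cmod2 (x k)) <= Hnorm lam 0 x.
Proof.
  intros [l Hl]. rewrite (Hnorm_eq _ _ _ _ Hl). apply sqrt_le_1_alt.
  rewrite Hq0 in Hl. apply (term_le_sum (fun k => Cmod2 (x k))); auto.
  intro; apply Cmod2_ge0.
Qed.

Lemma Hnorm0_small lam (y : R -> Hseq) (B : nat -> R) L t (D : R -> Prop) :
  (forall s k, D s -> Cmod2 (y s k) <= B k) -> (forall k, 0 <= B k) -> infinite_sum B L ->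
  (forall k eps, 0 < eps -> exists delta, 0 < delta /\
     forall s, D s -> Rabs (s - t) < delta -> Cmod2 (y s k) < eps) ->
  forall eps, 0 < eps -> exists delta, 0 < delta /\
     forall s, D s -> Rabs (s - t) < delta -> Hnorm lam 0 (y s) < eps.
Proof.
  intros Hc HB0 HB Hp eps He.
  destruct (series_small (fun s k => Cmod2 (y s k)) B L t D) with (eps := eps^2)
    as [d [Hd H]]; auto.
  - intros; split; auto. apply Cmod2_ge0.
  - nra.
  - exists d; split; auto. intros s Hs Hst.
    destruct (series_comp (fun k => Cmod2 (y s k)) B L) as [l [Hl [Hl0 _]]]; auto.
    { intro k; split; auto. apply Cmod2_ge0. }
    rewrite (Hnorm_eq lam 0 (y s) l). 2:{ rewrite Hq0; auto. }
    specialize (H s Hs Hst l Hl).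
    rewrite <- (sqrt_pow2 eps) by lra. apply sqrt_lt_1; nra.
Qed.

Lemma Hnorm_bound lam q x (B : nat -> R) L c :
  (forall k, Hq_terms lam q x k <= c * B k) -> (forall k, 0 <= Hq_terms lam q x k) ->
  infinite_sum B L -> inHq lam q x /\ Hnorm lam q x <= sqrt (c * L).
Proof.
  intros H H0 HB.
  destruct (series_comp (Hq_terms lam q x) (fun k => c * B k) (c * L)) as [l [Hl [_ Hle]]].
  - intro k; split; auto.
  - apply series_scal; auto.
  - split. exists l; auto. rewrite (Hnorm_eq _ _ _ _ Hl). apply sqrt_le_1_alt; auto.
Qed.

Lemma abs_sin_le_pos x : 0 < x -> Rabs (sin x) <= Rabs x.
Proof.
  intro H. pose proof (sin_lt_x x H). pose proof (SIN_bound x).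
  rewrite (Rabs_right x) by lra.
  destruct (Rle_dec x 1).
  + assert (0 <= sin x) by (apply sin_ge_0; pose proof PI2_1; lra).
    rewrite (Rabs_right (sin _)) by lra. lra.
  + apply Rabs_le. lra.
Qed.

Lemma abs_sin_le x : Rabs (sin x) <= Rabs x.
Proof.
  destruct (Rtotal_order x 0) as [H|[H|H]].
  - pose proof (abs_sin_le_pos (-x) ltac:(lra)). rewrite sin_neg, !Rabs_Ropp in H0. exact H0.
  - subst. rewrite sin_0. lra.
  - apply abs_sin_le_pos; lra.
Qed.

Lemma sq_le_of_abs a b : Rabs a <= Rabs b -> a^2 <= b^2.
Proof. intro H. rewrite <- !Rsqr_pow2. apply Rsqr_le_abs_1. exact H. Qed.

Lemma cos_diff_sq x y : (cos x - cos y)^2 <= (x - y)^2.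
Proof.
  apply sq_le_of_abs. rewrite form2. pose proof (abs_sin_le ((x-y)/2)). pose proof (SIN_bound ((x+y)/2)).
  assert (Rabs (sin ((x + y) / 2)) <= 1) by (apply Rabs_le; lra).
  rewrite !Rabs_mult. assert (E2 : Rabs (-2) = 2) by (rewrite Rabs_left; lra). rewrite E2.
  replace (Rabs (x-y)) with (2 * Rabs ((x-y)/2)).
  2:{ unfold Rdiv. rewrite Rabs_mult, (Rabs_right (/2)) by lra. lra. }
  pose proof (Rabs_pos (sin ((x - y) / 2))). pose proof (Rabs_pos (sin ((x + y) / 2))). nra.
Qed.

Lemma sin_diff_sq x y : (sin x - sin y)^2 <= (x - y)^2.
Proof.
  apply sq_le_of_abs. rewrite form4. pose proof (abs_sin_le ((x-y)/2)). pose proof (COS_bound ((x+y)/2)).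
  assert (Rabs (cos ((x + y) / 2)) <= 1) by (apply Rabs_le; lra).
  rewrite !Rabs_mult. rewrite (Rabs_right 2) by lra.
  replace (Rabs (x-y)) with (2 * Rabs ((x-y)/2)).
  2:{ unfold Rdiv. rewrite Rabs_mult, (Rabs_right (/2)) by lra. lra. }
  pose proof (Rabs_pos (sin ((x - y) / 2))). pose proof (Rabs_pos (cos ((x + y) / 2))). nra.
Qed.

Lemma sc1 x : sin x ^ 2 + cos x ^ 2 = 1.
Proof. rewrite <- !Rsqr_pow2. apply sin2_cos2. Qed.

Lemma sin_sq_le1 x : sin x ^2 <= 1.
Proof. pose proof (sc1 x). pose proof (pow2_ge_0 (cos x)). lra. Qed.
Lemma cos_sq_le1 x : cos x ^2 <= 1.
Proof. pose proof (sc1 x). pose proof (pow2_ge_0 (sin x)). lra. Qed.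

Lemma RInt_eq_of_is f a b l : is_RInt f a b l -> RInt_eq f a b l.
Proof.
  intro H. assert (Hex : ex_RInt f a b) by (exists l; exact H).
  exists (ex_RInt_Reals_0 f a b Hex). rewrite <- RInt_Reals. apply is_RInt_unique. exact H.
Qed.

Lemma is_RInt_antider (F f : R -> R) a b :
  (forall x, is_derive F x (f x)) -> (forall x, ex_derive f x) -> is_RInt f a b (F b - F a).
Proof.
  intros HF Hf. apply (is_RInt_derive F f a b).
  - intros; apply HF.
  - intros; exact (@ex_derive_continuous R_AbsRing R_NormedModule f x (Hf x)).
Qed.

Lemma RInt_eq_val f g a b l l' : a <= b -> RInt_eq f a b l -> is_RInt g a b l' ->
  (forall x, a < x < b -> f x = g x) -> l = l'.
Proof.
  intros Hab [pr Hpr] Hg Hfg. rewrite <- Hpr, <- RInt_Reals.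
  rewrite (RInt_ext f g). apply is_RInt_unique; auto.
  intros x Hx. rewrite Rmin_left, Rmax_right in Hx by lra. auto.
Qed.

Lemma ex_RInt_of_der (f : R -> R) a b : (forall x, ex_derive f x) -> ex_RInt f a b.
Proof. intros H. apply (@ex_RInt_continuous R_CompleteNormedModule). intros; exact (@ex_derive_continuous R_AbsRing R_NormedModule f z (H z)). Qed.

Lemma is_RInt_antider' (F f : R -> R) a b l :
  (forall x, is_derive F x (f x)) -> (forall x, ex_derive f x) -> F b - F a = l -> is_RInt f a b l.
Proof. intros H1 H2 <-. apply is_RInt_antider; auto. Qed.

Definition fPr om mu t := cos (om*t) * cos (mu*t).
Definition fPi om mu t := sin (om*t) * cos (mu*t).
Definition fQr om mu t := cos (om*t) * sin (mu*t).
Definition fQi om mu t := sin (om*t) * sin (mu*t).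
Definition Pc om T mu := mkC (RInt (fPr om mu) 0 T) (RInt (fPi om mu) 0 T).
Definition Qc om T mu := mkC (RInt (fQr om mu) 0 T) (RInt (fQi om mu) 0 T).

Lemma exd_fPr om mu x : ex_derive (fPr om mu) x. Proof. unfold fPr; auto_derive; auto. Qed.
Lemma exd_fPi om mu x : ex_derive (fPi om mu) x. Proof. unfold fPi; auto_derive; auto. Qed.
Lemma exd_fQr om mu x : ex_derive (fQr om mu) x. Proof. unfold fQr; auto_derive; auto. Qed.
Lemma exd_fQi om mu x : ex_derive (fQi om mu) x. Proof. unfold fQi; auto_derive; auto. Qed.

Lemma isR_fPr om T mu : is_RInt (fPr om mu) 0 T (Cre (Pc om T mu)).
Proof. apply (RInt_correct (V:=R_CompleteNormedModule)). apply ex_RInt_of_der, exd_fPr. Qed.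
Lemma isR_fPi om T mu : is_RInt (fPi om mu) 0 T (Cim (Pc om T mu)).
Proof. apply (RInt_correct (V:=R_CompleteNormedModule)). apply ex_RInt_of_der, exd_fPi. Qed.
Lemma isR_fQr om T mu : is_RInt (fQr om mu) 0 T (Cre (Qc om T mu)).
Proof. apply (RInt_correct (V:=R_CompleteNormedModule)). apply ex_RInt_of_der, exd_fQr. Qed.
Lemma isR_fQi om T mu : is_RInt (fQi om mu) 0 T (Cim (Qc om T mu)).
Proof. apply (RInt_correct (V:=R_CompleteNormedModule)). apply ex_RInt_of_der, exd_fQi. Qed.

Section Closed.
Variables om T mu : R.
Hypothesis HD : mu*mu - om*om <> 0.
Let D := mu*mu - om*om.

Lemma Pr_closed : Cre (Pc om T mu) =
  (mu*cos(om*T)*sin(mu*T) - om*sin(om*T)*cos(mu*T))/D.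
Proof.
  apply is_RInt_unique.
  apply (is_RInt_antider' (fun t => (mu*cos(om*t)*sin(mu*t) - om*sin(om*t)*cos(mu*t))/D)).
  3:{ rewrite !Rmult_0_r, cos_0, sin_0. unfold D. field. auto. }
  2: apply exd_fPr.
  intro x. unfold fPr, D. auto_derive. auto. field. auto.
Qed.

Lemma Pi_closed : Cim (Pc om T mu) =
  (om*cos(om*T)*cos(mu*T) + mu*sin(om*T)*sin(mu*T) - om)/D.
Proof.
  apply is_RInt_unique.
  apply (is_RInt_antider' (fun t => (om*cos(om*t)*cos(mu*t) + mu*sin(om*t)*sin(mu*t))/D)).
  3:{ rewrite !Rmult_0_r, cos_0, sin_0. unfold D. field. auto. }
  2: apply exd_fPi.
  intro x. unfold fPi, D. auto_derive. auto. field. auto.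
Qed.

Lemma Qr_closed : Cre (Qc om T mu) =
  (mu - mu*cos(om*T)*cos(mu*T) - om*sin(om*T)*sin(mu*T))/D.
Proof.
  apply is_RInt_unique.
  apply (is_RInt_antider' (fun t => (- mu*cos(om*t)*cos(mu*t) - om*sin(om*t)*sin(mu*t))/D)).
  3:{ rewrite !Rmult_0_r, cos_0, sin_0. unfold D. field. auto. }
  2: apply exd_fQr.
  intro x. unfold fQr, D. auto_derive. auto. field. auto.
Qed.

Lemma Qi_closed : Cim (Qc om T mu) =
  (om*cos(om*T)*sin(mu*T) - mu*sin(om*T)*cos(mu*T))/D.
Proof.
  apply is_RInt_unique.
  apply (is_RInt_antider' (fun t => (om*cos(om*t)*sin(mu*t) - mu*sin(om*t)*cos(mu*t))/D)).
  3:{ rewrite !Rmult_0_r, cos_0, sin_0. unfold D. field. auto. }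
  2: apply exd_fQi.
  intro x. unfold fQi, D. auto_derive. auto. field. auto.
Qed.
End Closed.

Lemma sinsq_int mu T : 0 < mu -> 0 < T ->
  is_RInt (fun t => sin (mu*t) * sin (mu*t)) 0 T (T/2 - sin (2*mu*T)/(4*mu)).
Proof.
  intros Hm HT.
  apply (is_RInt_antider' (fun t => t/2 - sin (2*mu*t)/(4*mu))).
  - intro x. auto_derive. auto.
    replace (2*mu*x) with (2*(mu*x)) by ring. rewrite cos_2a_sin. field. lra.
  - intro x. auto_derive. auto.
  - rewrite Rmult_0_r, sin_0. field. lra.
Qed.

Lemma sinsq_pos mu T : 0 < mu -> 0 < T -> 0 < T/2 - sin (2*mu*T)/(4*mu).
Proof.
  intros Hm HT. pose proof (sin_lt_x (2*mu*T) ltac:(nra)).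
  apply Rlt_0_minus. apply (Rmult_lt_reg_r (4*mu)). lra.
  field_simplify; lra.
Qed.

Lemma Qc_nz om T mu : 0 < mu -> 0 < T -> sin (om*T) <> 0 -> 0 < Cmod2 (Qc om T mu).
Proof.
  intros Hm HT Hs.
  destruct (Req_dec (mu*mu - om*om) 0) as [HD|HD].
  - assert (Hi : Cim (Qc om T mu) <> 0).
    { assert (om = mu \/ om = - mu) as [->| ->].
      { assert ((om - mu)*(om+mu) = 0) by nra. apply Rmult_integral in H. lra. }
      + unfold Qc; cbn [Cim]; unfold fQi. rewrite (is_RInt_unique _ _ _ _ (sinsq_int mu T Hm HT)).
        pose proof (sinsq_pos mu T Hm HT). lra.
      + assert (is_RInt (fQi (-mu) mu) 0 T (opp (T/2 - sin (2*mu*T)/(4*mu)))).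
        { apply (is_RInt_ext (V:=R_NormedModule) (fun t => opp (sin (mu*t) * sin (mu*t)))).
          - intros x _. unfold fQi, opp; simpl. replace (-mu*x) with (-(mu*x)) by ring.
            rewrite sin_neg. ring.
          - apply (is_RInt_opp (V:=R_NormedModule)). apply sinsq_int; auto. }
        unfold Qc; simpl. rewrite (is_RInt_unique _ _ _ _ H).
        pose proof (sinsq_pos mu T Hm HT). unfold opp; simpl. lra. }
    unfold Cmod2. pose proof (pow2_ge_0 (Cre (Qc om T mu))).
    pose proof (Rsqr_pos_lt _ Hi). rewrite Rsqr_pow2 in H0. lra.
  - unfold Cmod2. rewrite (Qr_closed om T mu HD), (Qi_closed om T mu HD).
    set (c := cos (om*T)). set (s := sin (om*T)). set (cm := cos (mu*T)). set (sm := sin (mu*T)).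
    assert (E1 : s^2 + c^2 = 1) by apply sc1. assert (E2 : sm^2 + cm^2 = 1) by apply sc1.
    assert (Hs' : s <> 0) by (unfold s; exact Hs).
    clearbody c s cm sm.
    set (Nr := mu - mu*c*cm - om*s*sm). set (Ni := om*c*sm - mu*s*cm).
    assert (Hn : Nr <> 0 \/ Ni <> 0).
    { destruct (Req_dec Nr 0) as [H1|H1]; [|left; auto].
      destruct (Req_dec Ni 0) as [H2|H2]; [|right; auto].
      exfalso. unfold Nr, Ni in *.
      set (p := mu*cm) in *. set (q := om*sm) in *.
      assert (Hmu : mu = c*p + s*q) by (unfold p, q in *; lra).
      assert (H0 : c*q - s*p = 0) by (unfold p, q in *; lra).
      assert (E : mu^2 = p^2 + q^2).
      { rewrite Hmu. replace ((c*p+s*q)^2) with ((c*p+s*q)^2 + (c*q - s*p)^2) by (rewrite H0; ring).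
        replace ((c * p + s * q) ^ 2 + (c * q - s * p) ^ 2) with ((s^2+c^2)*(p^2+q^2)) by ring.
        rewrite E1. ring. }
      unfold p, q in E.
      assert (sm^2 * (mu*mu - om*om) = 0).
      { replace (mu^2) with (mu^2 * (sm^2+cm^2)) in E by (rewrite E2; ring). nra. }
      apply Rmult_integral in H as [H|H]; [|contradiction].
      assert (sm = 0) by nra. subst sm.
      assert (Hc1 : cm^2 = 1) by lra.
      assert (Hsc : s * cm = 0).
      { unfold p, q in H0. assert (Hx : s*(mu*cm) = 0) by lra.
        replace (s*cm) with (s*(mu*cm)/mu) by (field; lra). rewrite Hx. field. lra. }
      apply Rmult_integral in Hsc as [Hsc|Hsc]. apply Hs'; auto.
      rewrite Hsc in Hc1. lra. }
    assert (0 < (Nr/(mu*mu-om*om))^2 + (Ni/(mu*mu-om*om))^2).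
    { destruct Hn as [Hn|Hn].
      - assert (Nr/(mu*mu-om*om) <> 0) by (unfold Rdiv; apply Rmult_integral_contrapositive; split; auto; apply Rinv_neq_0_compat; auto).
        pose proof (Rsqr_pos_lt _ H). rewrite Rsqr_pow2 in H0. pose proof (pow2_ge_0 (Ni / (mu * mu - om * om))). lra.
      - assert (Ni/(mu*mu-om*om) <> 0) by (unfold Rdiv; apply Rmult_integral_contrapositive; split; auto; apply Rinv_neq_0_compat; auto).
        pose proof (Rsqr_pos_lt _ H). rewrite Rsqr_pow2 in H0. pose proof (pow2_ge_0 (Nr / (mu * mu - om * om))). lra. }
    exact H.
Qed.

Lemma sq_split a b : a^2/2 - b^2 <= (a+b)^2.
Proof. pose proof (pow2_ge_0 (a + 2*b)). nra. Qed.

Lemma QP_large om T mu : 0 < mu -> om <> 0 -> 4*om^2 <= mu^2 * sin(om*T)^2 ->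
  sin(om*T)^2/(4*mu^2) <= Cmod2 (Qc om T mu) /\ Cmod2 (Pc om T mu) <= 12/mu^2.
Proof.
  intros Hm Ho Hl.
  pose proof (sin_sq_le1 (om*T)) as Hs1.
  assert (Ho2 : 0 < om^2) by (apply pow2_gt_0; auto).
  assert (Hmo : 4*om^2 <= mu^2) by nra.
  assert (HD : mu*mu - om*om <> 0) by nra.
  assert (HDp : 0 < mu*mu - om*om) by nra.
  assert (HDm : mu*mu - om*om <= mu^2) by nra.
  assert (HD34 : 3*mu^2/4 <= mu*mu - om*om) by nra.
  unfold Cmod2.
  rewrite (Qr_closed om T mu HD), (Qi_closed om T mu HD), (Pr_closed om T mu HD), (Pi_closed om T mu HD).
  set (D := mu*mu - om*om) in *.
  set (c := cos (om*T)) in *. set (s := sin (om*T)) in *. set (cm := cos (mu*T)). set (sm := sin (mu*T)).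
  assert (E1 : s^2 + c^2 = 1) by apply sc1. assert (E2 : sm^2 + cm^2 = 1) by apply sc1.
  clearbody c s cm sm D.
  assert (Hdiv : forall x y, (x/D)^2 + (y/D)^2 = (x^2+y^2)/D^2) by (intros; field; lra).
  rewrite !Hdiv.
  assert (HD2 : 0 < D^2) by nra.
  split.
  - pose (w1 := 1 - c*cm). pose (w2 := - s*cm). pose (r1 := - om*s*sm). pose (r2 := om*c*sm).
    assert (Hw : w1^2 + w2^2 >= s^2).
    { assert (w1^2+w2^2 = (cm-c)^2+s^2 + (s^2+c^2-1)*(cm^2-1)) by (unfold w1, w2; ring).
      rewrite E1 in H. pose proof (pow2_ge_0 (cm - c)). lra. }
    assert (Hr : r1^2 + r2^2 <= om^2).
    { assert (r1^2+r2^2 = om^2*sm^2*(s^2+c^2)) by (unfold r1, r2; ring).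
      rewrite E1 in H. pose proof (pow2_ge_0 cm). nra. }
    assert (HN : mu^2*s^2/4 <= (mu - mu*c*cm - om*s*sm)^2 + (om*c*sm - mu*s*cm)^2).
    { replace (mu - mu*c*cm - om*s*sm) with (mu*w1 + r1) by (unfold w1, r1; ring).
      replace (om*c*sm - mu*s*cm) with (mu*w2 + r2) by (unfold w2, r2; ring).
      pose proof (sq_split (mu*w1) r1). pose proof (sq_split (mu*w2) r2).
      assert (mu^2*(w1^2+w2^2) >= mu^2 * s^2) by (apply Rmult_ge_compat_l; nra).
      nra. }
    set (N := (mu - mu*c*cm - om*s*sm)^2 + (om*c*sm - mu*s*cm)^2) in *. clearbody N.
    assert (HD4 : D^2 <= mu^4) by nra.
    apply Rle_trans with (N / mu^4).
    + apply (Rmult_le_reg_r (4*mu^4)). nra.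
      replace (s^2/(4*mu^2) * (4*mu^4)) with (mu^2*s^2) by (field; lra).
      replace (N/mu^4*(4*mu^4)) with (4*N) by (field; lra). lra.
    + unfold Rdiv. apply Rmult_le_compat_l. apply Rle_trans with (mu^2*s^2/4); [|exact HN]. pose proof (pow2_ge_0 mu); pose proof (pow2_ge_0 s). apply Rmult_le_pos; [|lra]. apply Rmult_le_pos; lra.
      apply Rinv_le_contravar; auto.
  - pose (A := mu*sm). pose (B := om*cm).
    assert (HA : A^2 <= mu^2) by (unfold A; nra).
    assert (HB : B^2 <= om^2) by (unfold B; nra).
    assert (HM : (mu*c*sm - om*s*cm)^2 + (om*c*cm + mu*s*sm - om)^2 <= 3*mu^2).
    { replace (mu*c*sm - om*s*cm) with (c*A - s*B) by (unfold A, B; ring).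
      replace (om*c*cm + mu*s*sm - om) with ((s*A + c*B) - om) by (unfold A, B; ring).
      assert ((c*A - s*B)^2 + (s*A+c*B)^2 = (A^2+B^2)*(s^2+c^2)) by ring.
      rewrite E1 in H. pose proof (pow2_ge_0 (s*A + c*B + om)).
      assert ((s*A+c*B - om)^2 <= 2*(s*A+c*B)^2 + 2*om^2) by nra.
      pose proof (pow2_ge_0 (c*A - s*B)). lra. }
    set (M := (mu*c*sm - om*s*cm)^2 + (om*c*cm + mu*s*sm - om)^2) in *. clearbody M.
    assert (HD4 : mu^4/4 <= D^2) by nra.
    apply (Rmult_le_reg_r (D^2)); auto.
    replace (M / D^2 * D^2) with M by (field; lra).
    apply Rle_trans with (3*mu^2); auto.
    apply Rle_trans with (12/mu^2 * (mu^4/4)).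
    + right. field. lra.
    + apply Rmult_le_compat_l; auto. unfold Rdiv. apply Rmult_le_pos. lra.
      left; apply Rinv_0_lt_compat; nra.
Qed.

Definition Cinv (w : Cplx) := mkC (Cre w / Cmod2 w) (- Cim w / Cmod2 w).
Definition Cdiv z w := Cmul z (Cinv w).

Lemma Cmod2_mul z w : Cmod2 (Cmul z w) = Cmod2 z * Cmod2 w.
Proof. destruct z as [a b], w as [c d]; unfold Cmod2, Cmul; cbn [Cre Cim]. ring. Qed.

Lemma Cmod2_div z w : Cmod2 w <> 0 -> Cmod2 (Cdiv z w) = Cmod2 z / Cmod2 w.
Proof. destruct z as [a b], w as [c d]; unfold Cdiv, Cinv, Cmod2, Cmul; cbn [Cre Cim].
  intro H. field. exact H. Qed.

Lemma Cdiv_mul z w : Cmod2 w <> 0 -> Cmul (Cdiv z w) w = z.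
Proof. destruct z as [a b], w as [c d]; unfold Cdiv, Cinv, Cmod2, Cmul; cbn [Cre Cim].
  intro H. f_equal; field; exact H. Qed.

Lemma Cdiv_unique c z w : Cmod2 w <> 0 -> Cmul c w = z -> c = Cdiv z w.
Proof. intros H <-. destruct c as [a b], w as [c d]; unfold Cdiv, Cinv, Cmul; unfold Cmod2 in *; cbn [Cre Cim] in *.
  f_equal; field; exact H. Qed.

Definition Kmu om T mu := 2 * (/ mu^2 + Cmod2 (Pc om T mu)) / Cmod2 (Qc om T mu).

Lemma b_bound om T mu a g : 0 < mu -> 0 < Cmod2 (Qc om T mu) ->
  mu^2 * Cmod2 (Cdiv (Csub g (Cmul a (Pc om T mu))) (Qc om T mu)) <=
  Kmu om T mu * (mu^2 * Cmod2 a + (mu^2)^2 * Cmod2 g).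
Proof.
  intros Hm HQ. rewrite Cmod2_div by lra. unfold Kmu.
  pose proof (Cmod2_sub g (Cmul a (Pc om T mu))). rewrite Cmod2_mul in H.
  set (P2 := Cmod2 (Pc om T mu)) in *. set (Q2 := Cmod2 (Qc om T mu)) in *.
  pose proof (Cmod2_ge0 a). pose proof (Cmod2_ge0 g). pose proof (Cmod2_ge0 (Pc om T mu)).
  fold P2 in H2. clearbody P2 Q2.
  set (X := Cmod2 (Csub g (Cmul a (Pc om T mu)))) in *. clearbody X.
  set (A := Cmod2 a) in *. set (G := Cmod2 g) in *. clearbody A G.
  replace ((mu^2)^2) with (mu^4) by ring.
  apply (Rmult_le_reg_r Q2); auto.
  replace (mu ^ 2 * (X / Q2) * Q2) with (mu^2 * X) by (field; lra).
  replace (2 * (/ mu ^ 2 + P2) / Q2 * (mu ^ 2 * A + mu ^ 4 * G) * Q2) with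
    (2*A + 2*mu^2*G + 2*mu^2*P2*A + 2*mu^4*P2*G) by (field; lra).
  assert (0 < mu^2) by nra.
  assert (0 <= mu^4 * P2 * G) by (apply Rmult_le_pos; [apply Rmult_le_pos|]; nra).
  nra.
Qed.

Lemma fin_max (f : nat -> R) N : exists M, forall k, (k < N)%nat -> f k <= M.
Proof.
  induction N. exists 0. intros; lia.
  destruct IHN as [M HM]. exists (Rmax M (f N)). intros k Hk.
  destruct (Nat.eq_dec k N) as [->|Hne]. apply Rmax_r.
  apply Rle_trans with M. apply HM; lia. apply Rmax_l.
Qed.

Lemma lam_lb (lam : nat -> R) : (forall k, 0 < lam k) ->
  (forall M, exists N, forall k, (N <= k)%nat -> M < lam k) ->
  exists m, 0 < m /\ forall k, m <= lam k.
Proof.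
  intros Hp Hi. destruct (Hi 1) as [N HN]. destruct (fin_max (fun k => / lam k) N) as [M HM].
  exists (/ Rmax M 1). split. apply Rinv_0_lt_compat. pose proof (Rmax_r M 1). lra.
  intro k. destruct (Compare_dec.le_lt_dec N k) as [H|H].
  - specialize (HN k H). assert (/ Rmax M 1 <= 1).
    { rewrite <- Rinv_1 at 2. apply Rinv_le_contravar. lra. apply Rmax_r. } lra.
  - specialize (HM k H). cbv beta in HM. rewrite <- (Rinv_inv (lam k)).
    apply Rinv_le_contravar. apply Rinv_0_lt_compat; auto.
    apply Rle_trans with M; auto. apply Rmax_l.
Qed.

Lemma K_unif (lam : nat -> R) om T : (forall k, 0 < lam k) ->
  (forall M, exists N, forall k, (N <= k)%nat -> M < lam k) ->
  om <> 0 -> sin (om*T) <> 0 ->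
  exists K, 0 <= K /\ forall k, Kmu om T (sqrt (lam k)) <= K.
Proof.
  intros Hp Hi Ho Hs.
  set (s := sin (om*T)) in *.
  assert (Hs2 : 0 < s^2) by (apply pow2_gt_0; auto).
  destruct (Hi (4*om^2/s^2)) as [N HN].
  destruct (fin_max (fun k => Kmu om T (sqrt (lam k))) N) as [M HM].
  exists (Rmax 0 (Rmax M (104/s^2))). split. apply Rmax_l.
  intro k. apply Rle_trans with (Rmax M (104/s^2)); [|apply Rmax_r].
  destruct (Compare_dec.le_lt_dec N k) as [H|H].
  2:{ apply Rle_trans with M. apply HM; auto. apply Rmax_l. }
  apply Rle_trans with (104/s^2); [|apply Rmax_r].
  specialize (HN k H).
  set (mu := sqrt (lam k)).
  assert (Hmu : mu^2 = lam k) by (unfold mu; rewrite <- Rsqr_pow2; apply Rsqr_sqrt; left; auto).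
  assert (Hm : 0 < mu) by (unfold mu; apply sqrt_lt_R0; auto).
  clearbody mu.
  assert (Hl : 4*om^2 <= mu^2 * s^2).
  { rewrite Hmu. apply (Rmult_lt_compat_r (s^2)) in HN; auto.
    replace (4 * om ^ 2 / s ^ 2 * s ^ 2) with (4*om^2) in HN by (field; lra). lra. }
  destruct (QP_large om T mu Hm Ho Hl) as [HQ HP]. fold s in HQ.
  unfold Kmu.
  assert (0 < mu^2) by nra.
  assert (HQp : 0 < s^2/(4*mu^2)) by (apply Rdiv_lt_0_compat; nra).
  set (Q2 := Cmod2 (Qc om T mu)) in *. set (P2 := Cmod2 (Pc om T mu)) in *. clearbody Q2 P2.
  assert (0 < Q2) by lra.
  apply (Rmult_le_reg_r Q2); auto.
  replace (2 * (/ mu ^ 2 + P2) / Q2 * Q2) with (2 * (/ mu ^ 2 + P2)) by (field; lra).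
  apply Rle_trans with (2 * (13 / mu^2)).
  - assert (/mu^2 = 1/mu^2) by (field; lra). lra.
  - apply Rle_trans with (104 / s^2 * (s^2/(4*mu^2))).
    + right. field. split; lra.
    + apply Rmult_le_compat_l; auto. unfold Rdiv. apply Rmult_le_pos. lra. left; apply Rinv_0_lt_compat; auto.
Qed.

Section Sol.
Variables (lam : nat -> R) (om T : R) (a g : Hseq).
Hypothesis lam_pos : forall k, 0 < lam k.
Hypothesis HQ : forall k, 0 < Cmod2 (Qc om T (sqrt (lam k))).
Variables (K m : R).
Hypothesis HK0 : 0 <= K.
Hypothesis HK : forall k, Kmu om T (sqrt (lam k)) <= K.
Hypothesis Hm0 : 0 < m.
Hypothesis Hm : forall k, m <= lam k.

Definition mu k := sqrt (lam k).
Definition bco k := Cdiv (Csub (g k) (Cmul (a k) (Pc om T (mu k)))) (Qc om T (mu k)).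
Definition Usol t k := Cadd (CscaleR (cos (mu k * t)) (a k)) (CscaleR (sin (mu k * t)) (bco k)).
Definition Vsol t k := CscaleR (mu k) (Csub (CscaleR (cos (mu k * t)) (bco k)) (CscaleR (sin (mu k * t)) (a k))).
Definition Wk k := lam k * Cmod2 (a k) + lam k ^ 2 * Cmod2 (g k).
Definition Zk k := Cmod2 (a k) + Cmod2 (bco k).

Lemma mu_pos k : 0 < mu k.
Proof. unfold mu. apply sqrt_lt_R0; auto. Qed.
Lemma mu_sq k : mu k ^ 2 = lam k.
Proof. unfold mu. rewrite <- Rsqr_pow2. apply Rsqr_sqrt. left; auto. Qed.

Lemma Wk_ge0 k : 0 <= Wk k.
Proof. unfold Wk. pose proof (lam_pos k). pose proof (Cmod2_ge0 (a k)). pose proof (Cmod2_ge0 (g k)).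
  pose proof (pow2_ge_0 (lam k)). apply Rplus_le_le_0_compat; apply Rmult_le_pos; lra. Qed.
Lemma Zk_ge0 k : 0 <= Zk k.
Proof. unfold Zk. pose proof (Cmod2_ge0 (a k)). pose proof (Cmod2_ge0 (bco k)). lra. Qed.

Lemma lamZ k : lam k * Zk k <= (1 + K) * Wk k.
Proof.
  pose proof (b_bound om T (mu k) (a k) (g k) (mu_pos k) (HQ k)).
  rewrite mu_sq in H. fold (bco k) in H. unfold Zk, Wk.
  specialize (HK k). fold (mu k) in HK.
  pose proof (Wk_ge0 k). unfold Wk in H0.
  pose proof (lam_pos k). pose proof (Cmod2_ge0 (g k)). pose proof (Cmod2_ge0 (a k)).
  assert (0 <= lam k ^2 * Cmod2 (g k)) by (apply Rmult_le_pos; [apply pow2_ge_0| lra]).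
  assert (Kmu om T (mu k) * (lam k * Cmod2 (a k) + lam k ^ 2 * Cmod2 (g k)) <=
          K * (lam k * Cmod2 (a k) + lam k ^ 2 * Cmod2 (g k))) by (apply Rmult_le_compat_r; auto).
  nra.
Qed.

Lemma Z_le k : Zk k <= (1 + K) / m * Wk k.
Proof.
  pose proof (lamZ k). pose proof (Hm k). pose proof (Zk_ge0 k). pose proof (lam_pos k).
  assert (m * Zk k <= (1+K) * Wk k) by nra.
  apply (Rmult_le_reg_l m); auto. replace (m * ((1 + K) / m * Wk k)) with ((1+K)*Wk k) by (field; lra). lra.
Qed.

Lemma U_bound t k : Cmod2 (Usol t k) <= 2 * Zk k.
Proof.
  unfold Usol, Zk. eapply Rle_trans. apply Cmod2_comb.
  pose proof (cos_sq_le1 (mu k * t)). pose proof (sin_sq_le1 (mu k * t)).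
  pose proof (Cmod2_ge0 (a k)). pose proof (Cmod2_ge0 (bco k)). nra.
Qed.

Lemma V_bound t k : Cmod2 (Vsol t k) <= 2 * lam k * Zk k.
Proof.
  unfold Vsol, Zk. rewrite Cmod2_scale, mu_sq.
  assert (Csub (CscaleR (cos (mu k * t)) (bco k)) (CscaleR (sin (mu k * t)) (a k)) =
          Cadd (CscaleR (cos (mu k * t)) (bco k)) (CscaleR (- sin (mu k * t)) (a k))) as ->.
  { destruct (bco k) as [b1 b2], (a k) as [a1 a2]. unfold Csub, Cadd, CscaleR; cbn [Cre Cim]. f_equal; ring. }
  pose proof (Cmod2_comb (cos (mu k * t)) (- sin (mu k * t)) (bco k) (a k)).
  pose proof (cos_sq_le1 (mu k * t)). pose proof (sin_sq_le1 (mu k * t)).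
  replace ((- sin (mu k * t))^2) with (sin (mu k * t)^2) in H by ring.
  pose proof (Cmod2_ge0 (a k)). pose proof (Cmod2_ge0 (bco k)). pose proof (lam_pos k).
  assert (Cmod2 (Cadd (CscaleR (cos (mu k * t)) (bco k)) (CscaleR (- sin (mu k * t)) (a k))) <= 2 * (Cmod2 (a k) + Cmod2 (bco k))) by nra.
  nra.
Qed.

Lemma dU_eq s t k : Csub (Usol s k) (Usol t k) =
  Cadd (CscaleR (cos (mu k * s) - cos (mu k * t)) (a k)) (CscaleR (sin (mu k * s) - sin (mu k * t)) (bco k)).
Proof. unfold Usol. destruct (bco k) as [b1 b2], (a k) as [a1 a2]. unfold Csub, Cadd, CscaleR; cbn [Cre Cim]. f_equal; ring. Qed.

Lemma dV_eq s t k : Csub (Vsol s k) (Vsol t k) =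
  Cadd (CscaleR (mu k * (cos (mu k * s) - cos (mu k * t))) (bco k)) (CscaleR (- mu k * (sin (mu k * s) - sin (mu k * t))) (a k)).
Proof. unfold Vsol. destruct (bco k) as [b1 b2], (a k) as [a1 a2]. unfold Csub, Cadd, CscaleR; cbn [Cre Cim]. f_equal; ring. Qed.

Lemma dU_bound s t k : Cmod2 (Csub (Usol s k) (Usol t k)) <= 8 * Zk k /\
  Cmod2 (Csub (Usol s k) (Usol t k)) <= 2 * lam k * Zk k * (s - t)^2.
Proof.
  rewrite dU_eq. pose proof (Cmod2_comb (cos (mu k * s) - cos (mu k * t)) (sin (mu k * s) - sin (mu k * t)) (a k) (bco k)).
  pose proof (cos_diff_sq (mu k * s) (mu k * t)). pose proof (sin_diff_sq (mu k * s) (mu k * t)).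
  replace ((mu k * s - mu k * t)^2) with (lam k * (s-t)^2) in H0, H1 by (rewrite <- mu_sq; ring).
  pose proof (Cmod2_ge0 (a k)). pose proof (Cmod2_ge0 (bco k)). unfold Zk.
  pose proof (cos_sq_le1 (mu k * s)). pose proof (sin_sq_le1 (mu k * s)).
  pose proof (cos_sq_le1 (mu k * t)). pose proof (sin_sq_le1 (mu k * t)).
  assert ((cos (mu k * s) - cos (mu k * t))^2 <= 4) by (pose proof (pow2_ge_0 (cos (mu k * s) + cos (mu k * t))); nra).
  assert ((sin (mu k * s) - sin (mu k * t))^2 <= 4) by (pose proof (pow2_ge_0 (sin (mu k * s) + sin (mu k * t))); nra).
  split; nra.
Qed.

Lemma dV_bound s t k : Cmod2 (Csub (Vsol s k) (Vsol t k)) <= 8 * lam k * Zk k /\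
  Cmod2 (Csub (Vsol s k) (Vsol t k)) <= 2 * lam k ^ 2 * Zk k * (s - t)^2.
Proof.
  rewrite dV_eq.
  pose proof (Cmod2_comb (mu k * (cos (mu k * s) - cos (mu k * t))) (- mu k * (sin (mu k * s) - sin (mu k * t))) (bco k) (a k)).
  replace ((mu k * (cos (mu k * s) - cos (mu k * t))) ^ 2) with (lam k * (cos (mu k * s) - cos (mu k * t))^2) in H by (rewrite <- mu_sq; ring).
  replace ((- mu k * (sin (mu k * s) - sin (mu k * t))) ^ 2) with (lam k * (sin (mu k * s) - sin (mu k * t))^2) in H by (rewrite <- mu_sq; ring).
  pose proof (cos_diff_sq (mu k * s) (mu k * t)). pose proof (sin_diff_sq (mu k * s) (mu k * t)).
  replace ((mu k * s - mu k * t)^2) with (lam k * (s-t)^2) in H0, H1 by (rewrite <- mu_sq; ring).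
  pose proof (Cmod2_ge0 (a k)). pose proof (Cmod2_ge0 (bco k)). unfold Zk. pose proof (lam_pos k).
  pose proof (cos_sq_le1 (mu k * s)). pose proof (sin_sq_le1 (mu k * s)).
  pose proof (cos_sq_le1 (mu k * t)). pose proof (sin_sq_le1 (mu k * t)).
  assert ((cos (mu k * s) - cos (mu k * t))^2 <= 4) by (pose proof (pow2_ge_0 (cos (mu k * s) + cos (mu k * t))); nra).
  assert ((sin (mu k * s) - sin (mu k * t))^2 <= 4) by (pose proof (pow2_ge_0 (sin (mu k * s) + sin (mu k * t))); nra).
  set (dc := (cos (mu k * s) - cos (mu k * t))^2) in *. set (ds := (sin (mu k * s) - sin (mu k * t))^2) in *.
  set (A := Cmod2 (a k)) in *. set (B := Cmod2 (bco k)) in *.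
  assert (lam k * dc * B <= lam k * 4 * B) by (apply Rmult_le_compat_r; nra).
  assert (lam k * ds * A <= lam k * 4 * A) by (apply Rmult_le_compat_r; nra).
  assert (lam k * dc * B <= lam k * (lam k * (s-t)^2) * B) by (apply Rmult_le_compat_r; nra).
  assert (lam k * ds * A <= lam k * (lam k * (s-t)^2) * A) by (apply Rmult_le_compat_r; nra).
  split; nra.
Qed.


Definition e1 s t k := (cos (mu k * s) - cos (mu k * t)) / (s - t) + mu k * sin (mu k * t).
Definition e2 s t k := (sin (mu k * s) - sin (mu k * t)) / (s - t) - mu k * cos (mu k * t).

Lemma dq_eq s t k : seq_sub (seq_scale (/(s-t)) (seq_sub (Usol s) (Usol t))) (Vsol t) k =
  Cadd (CscaleR (e1 s t k) (a k)) (CscaleR (e2 s t k) (bco k)).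
Proof.
  unfold seq_sub, seq_scale, Usol, Vsol, e1, e2. destruct (bco k) as [b1 b2], (a k) as [a1 a2].
  unfold Csub, Cadd, CscaleR; cbn [Cre Cim]. unfold Rdiv. f_equal; ring.
Qed.

Lemma dq_bound s t k : s <> t ->
  Cmod2 (seq_sub (seq_scale (/(s-t)) (seq_sub (Usol s) (Usol t))) (Vsol t) k) <= 8 * lam k * Zk k.
Proof.
  intro Hst. rewrite dq_eq. eapply Rle_trans. apply Cmod2_comb.
  assert (Hd : 0 < (s-t)^2) by (apply pow2_gt_0; lra).
  pose proof (cos_diff_sq (mu k * s) (mu k * t)). pose proof (sin_diff_sq (mu k * s) (mu k * t)).
  replace ((mu k * s - mu k * t)^2) with (lam k * (s-t)^2) in H, H0 by (rewrite <- mu_sq; ring).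
  assert (Hc : ((cos (mu k * s) - cos (mu k * t)) / (s - t))^2 <= lam k).
  { unfold Rdiv. rewrite Rpow_mult_distr, pow_inv. apply (Rmult_le_reg_r ((s-t)^2)); auto.
    rewrite Rmult_assoc, Rinv_l by lra. lra. }
  assert (Hs : ((sin (mu k * s) - sin (mu k * t)) / (s - t))^2 <= lam k).
  { unfold Rdiv. rewrite Rpow_mult_distr, pow_inv. apply (Rmult_le_reg_r ((s-t)^2)); auto.
    rewrite Rmult_assoc, Rinv_l by lra. lra. }
  assert (He1 : e1 s t k ^2 <= 4 * lam k).
  { unfold e1. set (x := (cos (mu k * s) - cos (mu k * t)) / (s - t)) in *.
    pose proof (sin_sq_le1 (mu k * t)). pose proof (mu_sq k). pose proof (lam_pos k).
    pose proof (pow2_ge_0 (x - mu k * sin (mu k * t))).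
    assert ((mu k * sin (mu k * t))^2 <= lam k) by (rewrite Rpow_mult_distr, mu_sq; nra).
    nra. }
  assert (He2 : e2 s t k ^2 <= 4 * lam k).
  { unfold e2. set (x := (sin (mu k * s) - sin (mu k * t)) / (s - t)) in *.
    pose proof (cos_sq_le1 (mu k * t)). pose proof (mu_sq k). pose proof (lam_pos k).
    pose proof (pow2_ge_0 (x + mu k * cos (mu k * t))).
    assert ((mu k * cos (mu k * t))^2 <= lam k) by (rewrite Rpow_mult_distr, mu_sq; nra).
    nra. }
  unfold Zk. pose proof (Cmod2_ge0 (a k)). pose proof (Cmod2_ge0 (bco k)).
  assert (e1 s t k ^ 2 * Cmod2 (a k) <= 4 * lam k * Cmod2 (a k)) by (apply Rmult_le_compat_r; auto).
  assert (e2 s t k ^ 2 * Cmod2 (bco k) <= 4 * lam k * Cmod2 (bco k)) by (apply Rmult_le_compat_r; auto).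
  nra.
Qed.

Lemma der_cos k t : derivable_pt_lim (fun x => cos (mu k * x)) t (- (mu k * sin (mu k * t))).
Proof. apply is_derive_Reals. auto_derive. auto. ring. Qed.
Lemma der_sin k t : derivable_pt_lim (fun x => sin (mu k * x)) t (mu k * cos (mu k * t)).
Proof. apply is_derive_Reals. auto_derive. auto. ring. Qed.

Lemma lim_e k t eps : 0 < eps -> exists delta, 0 < delta /\
  forall s, s <> t -> Rabs (s - t) < delta -> e1 s t k ^2 + e2 s t k ^2 < eps.
Proof.
  intro He. set (ep := sqrt (eps/2)).
  assert (Hep : 0 < ep) by (apply sqrt_lt_R0; lra).
  assert (Hep2 : ep^2 = eps/2) by (unfold ep; rewrite <- Rsqr_pow2; apply Rsqr_sqrt; lra).
  destruct (der_cos k t ep Hep) as [d1 H1]. destruct (der_sin k t ep Hep) as [d2 H2].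
  exists (Rmin d1 d2). split. apply Rmin_pos; apply cond_pos.
  intros s Hst Hd.
  assert (h0 : s - t <> 0) by lra.
  assert (Hd1 : Rabs (s-t) < d1) by (eapply Rlt_le_trans; [exact Hd|apply Rmin_l]).
  assert (Hd2 : Rabs (s-t) < d2) by (eapply Rlt_le_trans; [exact Hd|apply Rmin_r]).
  specialize (H1 (s-t) h0 Hd1). specialize (H2 (s-t) h0 Hd2).
  replace (t + (s - t)) with s in H1, H2 by ring.
  assert (A1 : Rabs (e1 s t k) < ep).
  { unfold e1. replace ((cos (mu k * s) - cos (mu k * t)) / (s - t) + mu k * sin (mu k * t)) with
      ((cos (mu k * s) - cos (mu k * t)) / (s - t) - - (mu k * sin (mu k * t))) by ring. exact H1. }
  assert (A2 : Rabs (e2 s t k) < ep) by (unfold e2; exact H2).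
  assert (e1 s t k ^2 < ep^2).
  { rewrite <- !Rsqr_pow2. apply Rsqr_lt_abs_1. rewrite (Rabs_right ep); lra. }
  assert (e2 s t k ^2 < ep^2).
  { rewrite <- !Rsqr_pow2. apply Rsqr_lt_abs_1. rewrite (Rabs_right ep); lra. }
  lra.
Qed.

Lemma ptw_sq (X : R -> R) C t : 0 <= C -> (forall s, X s <= C * (s-t)^2) ->
  forall eps, 0 < eps -> exists delta, 0 < delta /\ forall s, Rabs (s - t) < delta -> X s < eps.
Proof.
  intros HC HX eps He. exists (sqrt (eps/(C+1))). split. apply sqrt_lt_R0. apply Rdiv_lt_0_compat; lra.
  intros s Hs. apply Rle_lt_trans with (C*(s-t)^2); auto.
  assert ((s-t)^2 < eps/(C+1)).
  { rewrite <- Rsqr_pow2. rewrite <- (Rsqr_sqrt (eps/(C+1))). apply Rsqr_lt_abs_1.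
    rewrite (Rabs_right (sqrt _)). auto. apply Rle_ge, sqrt_pos.
    left; apply Rdiv_lt_0_compat; lra. }
  apply Rle_lt_trans with ((C+1)*(s-t)^2). pose proof (pow2_ge_0 (s-t)). nra.
  apply (Rmult_lt_compat_l (C+1)) in H. 2: lra.
  replace ((C + 1) * (eps / (C + 1))) with eps in H by (field; lra). exact H.
Qed.

Section Exist.
Variables A G : R.
Hypothesis HA : infinite_sum (fun k => lam k * Cmod2 (a k)) A.
Hypothesis HG : infinite_sum (fun k => lam k ^ 2 * Cmod2 (g k)) G.

Lemma SW : infinite_sum Wk (A + G).
Proof. apply series_plus; auto. Qed.

Lemma SWc c : infinite_sum (fun k => c * Wk k) (c * (A + G)).
Proof. apply series_scal, SW. Qed.

Lemma U_H0 t : inHq lam 0 (Usol t) /\ Hnorm lam 0 (Usol t) <= sqrt (2*(1+K)/m * (A+G)).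
Proof.
  apply (Hnorm_bound lam 0 (Usol t) Wk (A+G) (2*(1+K)/m)); [| |apply SW].
  - intro k. rewrite Hq0. eapply Rle_trans. apply U_bound. pose proof (Z_le k).
    replace (2 * (1 + K) / m * Wk k) with (2 * ((1 + K) / m * Wk k)) by (field; lra). lra.
  - intro k. rewrite Hq0. apply Cmod2_ge0.
Qed.

Lemma U_H1 t : inHq lam 1 (Usol t) /\ Hnorm lam 1 (Usol t) <= sqrt (2*(1+K) * (A+G)).
Proof.
  apply (Hnorm_bound lam 1 (Usol t) Wk (A+G) (2*(1+K))); [| |apply SW].
  - intro k. rewrite Hq1. pose proof (U_bound t k). pose proof (lamZ k). pose proof (lam_pos k).
    assert (lam k * Cmod2 (Usol t k) <= lam k * (2 * Zk k)) by (apply Rmult_le_compat_l; lra). lra.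
  - intro k. rewrite Hq1. pose proof (lam_pos k). pose proof (Cmod2_ge0 (Usol t k)). nra.
Qed.

Lemma V_H0 t : inHq lam 0 (Vsol t) /\ Hnorm lam 0 (Vsol t) <= sqrt (2*(1+K) * (A+G)).
Proof.
  apply (Hnorm_bound lam 0 (Vsol t) Wk (A+G) (2*(1+K))); [| |apply SW].
  - intro k. rewrite Hq0. pose proof (V_bound t k). pose proof (lamZ k). lra.
  - intro k. rewrite Hq0. apply Cmod2_ge0.
Qed.

Lemma Usol_W1 : inW1inf lam T Usol Vsol.
Proof.
  pose proof (Z_le) as HZ. pose proof lamZ as HlZ.
  split; [|split; [|split; [|split]]].
  - split. intros; apply U_H0.
    intros t Ht eps He.
    destruct (Hnorm0_small lam (fun s => seq_sub (Usol s) (Usol t)) (fun k => 8*(1+K)/m * Wk k)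
       (8*(1+K)/m * (A+G)) t (fun s => 0 <= s <= T)) with (eps := eps) as [d [Hd Hdd]]; auto.
    + intros s k _. unfold seq_sub. destruct (dU_bound s t k) as [H1 _].
      specialize (HZ k). replace (8 * (1 + K) / m * Wk k) with (8 * ((1 + K) / m * Wk k)) by (field; lra). lra.
    + intro k. pose proof (Wk_ge0 k). apply Rmult_le_pos; auto. unfold Rdiv; apply Rmult_le_pos. lra.
      left; apply Rinv_0_lt_compat; auto.
    + apply SWc.
    + intros k ep Hep.
      destruct (ptw_sq (fun s => Cmod2 (seq_sub (Usol s) (Usol t) k)) (2 * lam k * Zk k) t) with (eps := ep)
        as [d [Hd Hdd]]; auto.
      * pose proof (lam_pos k); pose proof (Zk_ge0 k). apply Rmult_le_pos; lra.
      * intro s. apply dU_bound.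
      * exists d; split; auto.
    + exists d; split; auto.
  - intros; apply U_H1.
  - exists (sqrt (2*(1+K) * (A+G))). intros; apply U_H1.
  - intros t Ht eps He.
    destruct (Hnorm0_small lam (fun s => seq_sub (seq_scale (/(s-t)) (seq_sub (Usol s) (Usol t))) (Vsol t))
       (fun k => 8*(1+K) * Wk k) (8*(1+K) * (A+G)) t (fun s => 0 <= s <= T /\ s <> t)) with (eps := eps)
       as [d [Hd Hdd]]; auto.
    + intros s k [_ Hst]. eapply Rle_trans. apply dq_bound; auto.
      specialize (HlZ k). lra.
    + intro k. pose proof (Wk_ge0 k). apply Rmult_le_pos; lra.
    + apply SWc.
    + intros k ep Hep.
      destruct (lim_e k t (ep / (Zk k + 1))) as [d [Hd Hdd]].
      { pose proof (Zk_ge0 k). apply Rdiv_lt_0_compat; lra. }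
      exists d; split; auto. intros s [_ Hst] Hsd.
      rewrite dq_eq. eapply Rle_lt_trans. apply Cmod2_comb'.
      specialize (Hdd s Hst Hsd). fold (Zk k). pose proof (Zk_ge0 k).
      apply Rle_lt_trans with ((e1 s t k ^ 2 + e2 s t k ^ 2) * (Zk k + 1)).
      pose proof (pow2_ge_0 (e1 s t k)). pose proof (pow2_ge_0 (e2 s t k)). nra.
      apply (Rmult_lt_compat_r (Zk k + 1)) in Hdd. 2: lra.
      replace (ep / (Zk k + 1) * (Zk k + 1)) with ep in Hdd by (field; lra). exact Hdd.
    + exists d; split; [exact Hd|]. intros s Hs Hst Hsd. apply Hdd; auto.
  - split. intros; apply V_H0.
    intros t Ht eps He.
    destruct (Hnorm0_small lam (fun s => seq_sub (Vsol s) (Vsol t)) (fun k => 8*(1+K) * Wk k)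
       (8*(1+K) * (A+G)) t (fun s => 0 <= s <= T)) with (eps := eps) as [d [Hd Hdd]]; auto.
    + intros s k _. unfold seq_sub. destruct (dV_bound s t k) as [H1 _].
      specialize (HlZ k). lra.
    + intro k. pose proof (Wk_ge0 k). apply Rmult_le_pos; lra.
    + apply SWc.
    + intros k ep Hep.
      destruct (ptw_sq (fun s => Cmod2 (seq_sub (Vsol s) (Vsol t) k)) (2 * lam k ^ 2 * Zk k) t) with (eps := ep)
        as [d [Hd Hdd]]; auto.
      * pose proof (pow2_ge_0 (lam k)); pose proof (Zk_ge0 k). apply Rmult_le_pos; nra.
      * intro s. apply dV_bound.
      * exists d; split; auto.
    + exists d; split; auto.
Qed.
End Exist.

Lemma is_RInt_ext_R (f f2 : R -> R) c d l : is_RInt f c d l -> (forall x, f x = f2 x) -> is_RInt f2 c d l.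
Proof. intros H E. apply (is_RInt_ext (V:=R_NormedModule) f); auto. Qed.

Lemma is_RInt_lin4 f1 f2 f3 f4 (x1 x2 x3 x4 l1 l2 l3 l4 c d : R) :
  is_RInt f1 c d l1 -> is_RInt f2 c d l2 -> is_RInt f3 c d l3 -> is_RInt f4 c d l4 ->
  is_RInt (fun t => x1 * f1 t + x2 * f2 t + x3 * f3 t + x4 * f4 t) c d (x1*l1 + x2*l2 + x3*l3 + x4*l4).
Proof.
  intros H1 H2 H3 H4.
  apply (is_RInt_plus (V:=R_NormedModule)); [apply (is_RInt_plus (V:=R_NormedModule)); [apply (is_RInt_plus (V:=R_NormedModule))|]|];
  apply (is_RInt_scal (V:=R_NormedModule)); auto.
Qed.

Lemma bc_val_re mu (x c : Cplx) :
  is_RInt (fun t => Cre (Cmul (Cexpi (om*t)) (Cadd (CscaleR (cos (mu*t)) x) (CscaleR (sin (mu*t)) c)))) 0 T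
    (Cre (Cadd (Cmul x (Pc om T mu)) (Cmul c (Qc om T mu)))).
Proof.
  destruct x as [a1 a2], c as [c1 c2].
  pose proof (is_RInt_lin4 _ _ _ _ a1 c1 (-a2) (-c2) _ _ _ _ 0 T (isR_fPr om T mu) (isR_fQr om T mu) (isR_fPi om T mu) (isR_fQi om T mu)).
  replace (Cre (Cadd (Cmul (mkC a1 a2) (Pc om T mu)) (Cmul (mkC c1 c2) (Qc om T mu)))) with
     (a1 * Cre (Pc om T mu) + c1 * Cre (Qc om T mu) + - a2 * Cim (Pc om T mu) + - c2 * Cim (Qc om T mu))
     by (unfold Cmul, Cadd; cbn [Cre Cim]; ring).
  apply (is_RInt_ext_R _ _ _ _ _ H).
  intros t. unfold Cmul, Cexpi, Cadd, CscaleR, fPr, fQr, fPi, fQi; cbn [Cre Cim]. ring.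
Qed.

Lemma bc_val_im mu (x c : Cplx) :
  is_RInt (fun t => Cim (Cmul (Cexpi (om*t)) (Cadd (CscaleR (cos (mu*t)) x) (CscaleR (sin (mu*t)) c)))) 0 T
    (Cim (Cadd (Cmul x (Pc om T mu)) (Cmul c (Qc om T mu)))).
Proof.
  destruct x as [a1 a2], c as [c1 c2].
  pose proof (is_RInt_lin4 _ _ _ _ a2 c2 a1 c1 _ _ _ _ 0 T (isR_fPr om T mu) (isR_fQr om T mu) (isR_fPi om T mu) (isR_fQi om T mu)).
  replace (Cim (Cadd (Cmul (mkC a1 a2) (Pc om T mu)) (Cmul (mkC c1 c2) (Qc om T mu)))) with
     (a2 * Cre (Pc om T mu) + c2 * Cre (Qc om T mu) + a1 * Cim (Pc om T mu) + c1 * Cim (Qc om T mu))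
     by (unfold Cmul, Cadd; cbn [Cre Cim]; ring).
  apply (is_RInt_ext_R _ _ _ _ _ H).
  intros t. unfold Cmul, Cexpi, Cadd, CscaleR, fPr, fQr, fPi, fQi; cbn [Cre Cim]. ring.
Qed.

Lemma aPbQ k : Cadd (Cmul (a k) (Pc om T (mu k))) (Cmul (bco k) (Qc om T (mu k))) = g k.
Proof.
  unfold bco. rewrite Cdiv_mul. 2: { pose proof (HQ k). fold (mu k) in H. apply Rgt_not_eq. lra. }
  destruct (a k) as [a1 a2], (g k) as [g1 g2], (Pc om T (mu k)) as [p1 p2].
  unfold Cadd, Csub, Cmul; cbn [Cre Cim]. f_equal; ring.
Qed.

Lemma Usol_bc_int : bc_int om T Usol g.
Proof.
  intro k. split; apply RInt_eq_of_is; rewrite <- (aPbQ k); unfold Usol.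
  apply bc_val_re. apply bc_val_im.
Qed.

Lemma Usol_init : bc_init Usol a.
Proof.
  intro k. unfold Usol. rewrite Rmult_0_r, cos_0, sin_0.
  destruct (a k) as [a1 a2], (bco k) as [b1 b2]. unfold Cadd, CscaleR; cbn [Cre Cim]. f_equal; ring.
Qed.

Lemma Usol_wave : wave_eq lam T Usol Vsol.
Proof.
  intros s t _ _ _ k. pose proof (mu_sq k) as Hmu.
  unfold Usol, Vsol. destruct (a k) as [a1 a2], (bco k) as [b1 b2].
  unfold CInt_eq, Csub, CscaleR, Cadd; cbn [Cre Cim].
  split; apply RInt_eq_of_is.
  - apply (is_RInt_antider' (fun r => mu k * (cos (mu k * r) * b1 - sin (mu k * r) * a1))).
    + intro x. auto_derive. auto. rewrite <- Hmu. ring.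
    + intro x. auto_derive. auto.
    + ring.
  - apply (is_RInt_antider' (fun r => mu k * (cos (mu k * r) * b2 - sin (mu k * r) * a2))).
    + intro x. auto_derive. auto. rewrite <- Hmu. ring.
    + intro x. auto_derive. auto.
    + ring.
Qed.
End Sol.

Lemma isd_plus (f h : R -> R) (x df dh : R) : is_derive f x df -> is_derive h x dh ->
  is_derive (fun r => f r + h r) x (df + dh).
Proof. intros. exact (is_derive_plus f h x df dh H H0). Qed.
Lemma isd_minus (f h : R -> R) (x df dh : R) : is_derive f x df -> is_derive h x dh ->
  is_derive (fun r => f r - h r) x (df - dh).
Proof. intros. exact (is_derive_minus f h x df dh H H0). Qed.
Lemma isd_mult (f h : R -> R) (x df dh : R) : is_derive f x df -> is_derive h x dh ->
  is_derive (fun r => f r * h r) x (df * h x + f x * dh).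
Proof. intros. exact (is_derive_mult f h x df dh H H0 Rmult_comm). Qed.
Lemma isd_val (f : R -> R) (x l l' : R) : is_derive f x l -> l = l' -> is_derive f x l'.
Proof. intros H <-; exact H. Qed.
Lemma isd_loc (f h : R -> R) (x l delta : R) : 0 < delta ->
  (forall r, Rabs (r - x) < delta -> f r = h r) -> is_derive f x l -> is_derive h x l.
Proof.
  intros Hd E H. apply (is_derive_ext_loc f h x l); auto.
  exists (mkposreal delta Hd). intros r Hr. apply E. exact Hr.
Qed.

Definition cl (T r : R) := Rmax 0 (Rmin T r).
Lemma cl_id T t : 0 <= t <= T -> cl T t = t.
Proof. intros [H1 H2]. unfold cl. rewrite Rmin_right by lra. rewrite Rmax_right by lra. auto. Qed.
Lemma cl_in T r : 0 <= T -> 0 <= cl T r <= T.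
Proof. intro H. unfold cl, Rmax, Rmin. repeat destruct Rle_dec; lra. Qed.
Lemma cl_lip T r t : 0 <= T -> Rabs (cl T r - cl T t) <= Rabs (r - t).
Proof. intro H. unfold cl, Rmax, Rmin. repeat destruct Rle_dec; split_Rabs; lra. Qed.

Definition wc (T : R) (h : R -> R) t := forall eps, 0 < eps -> exists delta, 0 < delta /\
  forall s, 0 <= s <= T -> Rabs (s - t) < delta -> Rabs (h s - h t) < eps.

Lemma wc_cont T h t : 0 <= T -> 0 <= t <= T -> wc T h t -> continuity_pt (fun r => h (cl T r)) t.
Proof.
  intros HT Ht H. unfold continuity_pt, continue_in, limit1_in, limit_in.
  intros eps He. destruct (H eps He) as [d [Hd Hdd]]. exists d. split; auto.
  intros r [_ Hr]. simpl in *. unfold R_dist in *. rewrite (cl_id T t Ht).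
  apply Hdd. apply cl_in; auto. pose proof (cl_lip T r t HT). rewrite (cl_id T t Ht) in H0. lra.
Qed.

Lemma wc_of_cont T h t : continuity_pt h t -> wc T h t.
Proof.
  intros H eps He. destruct (H eps He) as [d [Hd Hdd]]. exists d. split; auto.
  intros s _ Hs. destruct (Req_dec s t) as [->|Hne]. rewrite Rminus_diag, Rabs_R0; auto.
  apply (Hdd s). split. split. exact I. auto. exact Hs.
Qed.

Lemma wc_minus T h1 h2 t : wc T h1 t -> wc T h2 t -> wc T (fun r => h1 r - h2 r) t.
Proof.
  intros H1 H2 eps He. destruct (H1 (eps/2)) as [d1 [Hd1 HH1]]. lra.
  destruct (H2 (eps/2)) as [d2 [Hd2 HH2]]. lra.
  exists (Rmin d1 d2). split. apply Rmin_pos; auto. intros s Hs Hst.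
  assert (Rabs (s-t) < d1) by (eapply Rlt_le_trans; [exact Hst|apply Rmin_l]).
  assert (Rabs (s-t) < d2) by (eapply Rlt_le_trans; [exact Hst|apply Rmin_r]).
  specialize (HH1 s Hs H). specialize (HH2 s Hs H0).
  replace (h1 s - h2 s - (h1 t - h2 t)) with ((h1 s - h1 t) - (h2 s - h2 t)) by ring.
  eapply Rle_lt_trans. apply Rabs_triang. rewrite Rabs_Ropp. lra.
Qed.

Section ODE.
Variables (lm mu T : R) (x y : R -> R).
Hypothesis HT : 0 < T.
Hypothesis Hmu : 0 < mu.
Hypothesis Hlm : mu ^ 2 = lm.
Hypothesis Hd : forall t, 0 <= t <= T -> forall eps, 0 < eps -> exists delta, 0 < delta /\
  forall s, 0 <= s <= T -> s <> t -> Rabs (s - t) < delta -> Rabs ((x s - x t) / (s - t) - y t) < eps.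
Hypothesis Hc : forall t, 0 <= t <= T -> wc T y t.
Hypothesis Hi : forall s t, 0 <= s -> s <= t -> t <= T -> RInt_eq (fun r => - lm * x r) s t (y t - y s).

Lemma x_der t : 0 < t < T -> is_derive x t (y t).
Proof.
  intro Ht. apply is_derive_Reals. intros eps He.
  destruct (Hd t ltac:(lra) eps He) as [d [Hd0 Hdd]].
  assert (Hp : 0 < Rmin d (Rmin t (T - t))) by (repeat apply Rmin_pos; lra).
  exists (mkposreal _ Hp). intros h Hh0 Hh. simpl in Hh.
  assert (Rabs h < d) by (eapply Rlt_le_trans; [exact Hh| apply Rmin_l]).
  assert (Rabs h < Rmin t (T-t)) by (eapply Rlt_le_trans; [exact Hh| apply Rmin_r]).
  assert (Rabs h < t) by (eapply Rlt_le_trans; [exact H0| apply Rmin_l]).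
  assert (Rabs h < T - t) by (eapply Rlt_le_trans; [exact H0| apply Rmin_r]).
  specialize (Hdd (t + h)). replace (t + h - t) with h in Hdd by ring.
  apply Hdd; auto. split; apply Rabs_def2 in H1; apply Rabs_def2 in H2; lra. lra.
Qed.

Lemma x_wc t : 0 <= t <= T -> wc T x t.
Proof.
  intros Ht eps He. destruct (Hd t Ht 1 Rlt_0_1) as [d [Hd0 Hdd]].
  set (M := Rabs (y t) + 1).
  assert (HM : 0 < M) by (unfold M; pose proof (Rabs_pos (y t)); lra).
  exists (Rmin d (eps / M)). split. apply Rmin_pos; auto. apply Rdiv_lt_0_compat; auto.
  intros s Hs Hst. destruct (Req_dec s t) as [->|Hne]. rewrite Rminus_diag, Rabs_R0; auto.
  assert (Rabs (s-t) < d) by (eapply Rlt_le_trans; [exact Hst|apply Rmin_l]).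
  assert (Rabs (s-t) < eps/M) by (eapply Rlt_le_trans; [exact Hst|apply Rmin_r]).
  specialize (Hdd s Hs Hne H).
  assert (Rabs ((x s - x t) / (s - t)) < M).
  { unfold M. replace ((x s - x t) / (s - t)) with (((x s - x t) / (s - t) - y t) + y t) by ring.
    eapply Rle_lt_trans. apply Rabs_triang. lra. }
  replace (x s - x t) with ((x s - x t) / (s - t) * (s - t)) by (field; lra).
  rewrite Rabs_mult. apply Rle_lt_trans with (M * Rabs (s - t)).
  apply Rmult_le_compat_r. apply Rabs_pos. lra.
  apply (Rmult_lt_compat_l M) in H0; auto. replace (M * (eps / M)) with eps in H0 by (field; lra). exact H0.
Qed.

Lemma y_der t : 0 < t < T -> is_derive y t (- lm * x t).
Proof.
  intro Ht. set (F := fun r => - lm * x r).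
  assert (HF : forall r, 0 <= r <= T -> RInt F 0 r = y r - y 0).
  { intros r Hr. destruct (Hi 0 r ltac:(lra) ltac:(lra) ltac:(lra)) as [pr Hpr].
    unfold F. rewrite RInt_Reals with (pr := pr). exact Hpr. }
  assert (Hdp : 0 < Rmin t (T - t)) by (apply Rmin_pos; lra).
  assert (Hloc : forall r, Rabs (r - t) < Rmin t (T - t) -> 0 <= r <= T).
  { intros r Hr. assert (Rabs (r-t) < t) by (eapply Rlt_le_trans; [exact Hr|apply Rmin_l]).
    assert (Rabs (r-t) < T - t) by (eapply Rlt_le_trans; [exact Hr|apply Rmin_r]).
    apply Rabs_def2 in H; apply Rabs_def2 in H0. lra. }
  assert (HI : is_derive (fun b => RInt F 0 b) t (F t)).
  { apply (is_derive_RInt (V:=R_NormedModule) F (fun b => RInt F 0 b) 0 t).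
    - exists (mkposreal _ Hdp). intros r Hr. apply (RInt_correct (V:=R_CompleteNormedModule)).
      assert (Hr' : 0 <= r <= T) by (apply Hloc; exact Hr).
      destruct (Hi 0 r ltac:(lra) ltac:(lra) ltac:(lra)) as [pr _].
      apply ex_RInt_Reals_1. exact pr.
    - apply (@ex_derive_continuous R_AbsRing R_NormedModule).
      exists (- lm * y t). unfold F. apply is_derive_scal. apply x_der; auto. }
  apply (isd_loc (fun r => y 0 + RInt F 0 r) y t _ (Rmin t (T-t))); auto.
  - intros r Hr. rewrite HF by (apply Hloc; auto). ring.
  - apply (isd_val _ _ (0 + F t)). apply isd_plus; auto. apply (is_derive_const (K:=R_AbsRing) (V:=R_NormedModule)).
    unfold F; ring.
Qed.

Definition Xs r := x 0 * cos (mu * r) + y 0 / mu * sin (mu * r).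
Definition Ys r := mu * (y 0 / mu * cos (mu * r) - x 0 * sin (mu * r)).
Definition fs r := x r - Xs r.
Definition gs r := y r - Ys r.
Definition Es r := lm * (fs (cl T r) * fs (cl T r)) + gs (cl T r) * gs (cl T r).

Lemma Xs_der r : is_derive Xs r (Ys r).
Proof. unfold Xs, Ys. auto_derive. auto. field. lra. Qed.
Lemma Ys_der r : is_derive Ys r (- lm * Xs r).
Proof. unfold Xs, Ys. auto_derive. auto. rewrite <- Hlm. field. lra. Qed.

Lemma Es_der t : 0 < t < T -> is_derive Es t 0.
Proof.
  intro Ht.
  assert (Hf : is_derive fs t (gs t)) by (apply isd_minus; [apply x_der; auto| apply Xs_der]).
  assert (Hg : is_derive gs t (- lm * fs t)).
  { apply (isd_val _ _ (- lm * x t - - lm * Xs t)). apply isd_minus; [apply y_der; auto| apply Ys_der].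
    unfold fs; ring. }
  assert (Hdp : 0 < Rmin t (T - t)) by (apply Rmin_pos; lra).
  apply (isd_loc (fun r => lm * (fs r * fs r) + gs r * gs r) Es t 0 (Rmin t (T-t))); auto.
  - intros r Hr. unfold Es. rewrite (cl_id T r). auto.
    assert (Rabs (r-t) < t) by (eapply Rlt_le_trans; [exact Hr|apply Rmin_l]).
    assert (Rabs (r-t) < T - t) by (eapply Rlt_le_trans; [exact Hr|apply Rmin_r]).
    apply Rabs_def2 in H; apply Rabs_def2 in H0. lra.
  - apply (isd_val _ _ (lm * (gs t * fs t + fs t * gs t) + ((- lm * fs t) * gs t + gs t * (- lm * fs t)))).
    apply isd_plus. apply is_derive_scal. apply isd_mult; auto. apply isd_mult; auto.
    ring.
Qed.

Lemma Es_cont t : 0 <= t <= T -> continuity_pt Es t.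
Proof.
  intro Ht.
  assert (Cf : continuity_pt (fun r => fs (cl T r)) t).
  { apply wc_cont; auto. lra. apply wc_minus. apply x_wc; auto. apply wc_of_cont.
    apply continuity_pt_filterlim. apply (@ex_derive_continuous R_AbsRing R_NormedModule).
    eexists; apply Xs_der. }
  assert (Cg : continuity_pt (fun r => gs (cl T r)) t).
  { apply wc_cont; auto. lra. apply wc_minus. apply Hc; auto. apply wc_of_cont.
    apply continuity_pt_filterlim. apply (@ex_derive_continuous R_AbsRing R_NormedModule).
    eexists; apply Ys_der. }
  unfold Es.
  apply (continuity_pt_plus (fun r => lm * (fs (cl T r) * fs (cl T r))) (fun r => gs (cl T r) * gs (cl T r))).
  apply (continuity_pt_scal (fun r => fs (cl T r) * fs (cl T r))).
  apply (continuity_pt_mult (fun r => fs (cl T r)) (fun r => fs (cl T r))); auto.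
  apply (continuity_pt_mult (fun r => gs (cl T r)) (fun r => gs (cl T r))); auto.
Qed.

Lemma ode_unique t : 0 <= t <= T -> x t = Xs t /\ y t = Ys t.
Proof.
  intro Ht.
  assert (E0 : Es 0 = 0).
  { unfold Es. rewrite cl_id by lra. unfold fs, gs, Xs, Ys. rewrite Rmult_0_r, cos_0, sin_0.
    replace (x 0 - (x 0 * 1 + y 0 / mu * 0)) with 0 by ring.
    replace (y 0 - mu * (y 0 / mu * 1 - x 0 * 0)) with 0 by (field; lra). ring. }
  assert (Et : Es t = 0).
  { destruct (Req_dec t 0) as [->|Hne]; auto.
    destruct (MVT_gen Es 0 t (fun _ => 0)) as [c [_ Hc']].
    - intros r Hr. rewrite Rmin_left, Rmax_right in Hr by lra. apply Es_der. lra.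
    - intros r Hr. rewrite Rmin_left, Rmax_right in Hr by lra. apply Es_cont. lra.
    - lra. }
  unfold Es in Et. rewrite cl_id in Et by auto.
  assert (0 < lm) by (rewrite <- Hlm; apply pow2_gt_0; lra).
  assert (fs t * fs t >= 0) by (apply Rle_ge; apply Rle_0_sqr).
  assert (gs t * gs t >= 0) by (apply Rle_ge; apply Rle_0_sqr).
  assert (fs t * fs t = 0) by nra. assert (gs t * gs t = 0) by nra.
  apply Rmult_integral in H2. apply Rmult_integral in H3.
  unfold fs, gs in *. split; lra.
Qed.
End ODE.

Lemma coef_re_small lam (z : Hseq) k eps : inHq lam 0 z -> Hnorm lam 0 z < eps -> Rabs (Cre (z k)) < eps.
Proof. intros H1 H2. apply Rle_lt_trans with (Hnorm lam 0 z); auto.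
  eapply Rle_trans. apply Cre_le. apply coef_le_Hnorm; auto. Qed.
Lemma coef_im_small lam (z : Hseq) k eps : inHq lam 0 z -> Hnorm lam 0 z < eps -> Rabs (Cim (z k)) < eps.
Proof. intros H1 H2. apply Rle_lt_trans with (Hnorm lam 0 z); auto.
  eapply Rle_trans. apply Cim_le. apply coef_le_Hnorm; auto. Qed.

Section Char.
Variables (lam : nat -> R) (om T : R) (a g : Hseq) (u v : R -> Hseq).
Hypothesis lam_pos : forall k, 0 < lam k.
Hypothesis HT : 0 < T.
Hypothesis HQ : forall k, 0 < Cmod2 (Qc om T (sqrt (lam k))).
Hypothesis Hsol : is_solution lam T om a g u v.

Lemma char_gen (pr : Cplx -> R) (Hpr : forall (z : Hseq) k eps, inHq lam 0 z -> Hnorm lam 0 z < eps -> Rabs (pr (z k)) < eps)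
  (Hlin_dq : forall (z w y : Cplx) r, pr (Csub (CscaleR r (Csub z w)) y) = r * (pr z - pr w) - pr y)
  (Hlin_sub : forall (z w : Cplx), pr (Csub z w) = pr z - pr w) k
  (Hwk : forall s t, 0 <= s -> s <= t -> t <= T ->
     RInt_eq (fun r => - lam k * pr (u r k)) s t (pr (v t k) - pr (v s k))) :
  forall t, 0 <= t <= T ->
    pr (u t k) = Xs (mu lam k) (fun r => pr (u r k)) (fun r => pr (v r k)) t /\
    pr (v t k) = Ys (mu lam k) (fun r => pr (u r k)) (fun r => pr (v r k)) t.
Proof.
  destruct Hsol as [[[Hu0 _] [_ [_ [Hder [Hv0 Hvc]]]]] _].
  apply (ode_unique (lam k) (mu lam k) T); auto.
  - apply (mu_pos lam lam_pos).
  - apply (mu_sq lam lam_pos).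
  - intros t Ht eps He. destruct (Hder t Ht eps He) as [d [Hd Hdd]].
    exists d; split; auto. intros s Hs Hst Hsd.
    specialize (Hdd s Hs Hst Hsd).
    assert (Hin : inHq lam 0 (seq_sub (seq_scale (/ (s - t)) (seq_sub (u s) (u t))) (v t))).
    { apply inH_sub; [apply inH_scale; apply inH_sub; [apply Hu0; auto| apply Hu0; auto] | apply Hv0; auto]. }
    pose proof (Hpr _ k eps Hin Hdd) as H.
    unfold seq_sub, seq_scale in H. rewrite Hlin_dq in H. unfold Rdiv. rewrite (Rmult_comm (_ - _)). exact H.
  - intros t Ht eps He. destruct (Hvc t Ht eps He) as [d [Hd Hdd]].
    exists d; split; auto. intros s Hs Hsd.
    specialize (Hdd s Hs Hsd).
    assert (Hin : inHq lam 0 (seq_sub (v s) (v t))) by (apply inH_sub; [apply Hv0; auto| apply Hv0; auto]).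
    pose proof (Hpr _ k eps Hin Hdd) as H.
    unfold seq_sub in H. rewrite Hlin_sub in H. exact H.
Qed.

Lemma char k t : 0 <= t <= T -> u t k = Usol lam om T a g t k /\ v t k = Vsol lam om T a g t k.
Proof.
  intro Ht.
  pose proof Hsol as [_ [Hw [Hinit Hint]]].
  assert (Hre := char_gen Cre (coef_re_small lam) ltac:(intros; reflexivity) ltac:(intros; reflexivity) k
     ltac:(intros s t0 H1 H2 H3; exact (proj1 (Hw s t0 H1 H2 H3 k)))).
  assert (Him := char_gen Cim (coef_im_small lam) ltac:(intros; reflexivity) ltac:(intros; reflexivity) k
     ltac:(intros s t0 H1 H2 H3; exact (proj2 (Hw s t0 H1 H2 H3 k)))).
  set (M := mu lam k) in *.
  assert (HM : 0 < M) by (apply mu_pos; auto).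
  set (c := mkC (Cre (v 0 k) / M) (Cim (v 0 k) / M)).
  assert (Hform : forall r, 0 <= r <= T ->
    u r k = Cadd (CscaleR (cos (M * r)) (a k)) (CscaleR (sin (M * r)) c) /\
    v r k = CscaleR M (Csub (CscaleR (cos (M * r)) c) (CscaleR (sin (M * r)) (a k)))).
  { intros r Hr. destruct (Hre r Hr) as [E1 E2]. destruct (Him r Hr) as [E3 E4].
    rewrite <- (Hinit k). unfold Xs, Ys in *. unfold c.
    destruct (u r k) as [u1 u2], (v r k) as [v1 v2]; cbn [Cre Cim] in *.
    unfold Cadd, CscaleR, Csub; cbn [Cre Cim]. split; f_equal; lra. }
  assert (Hg : g k = Cadd (Cmul (a k) (Pc om T M)) (Cmul c (Qc om T M))).
  { destruct (Hint k) as [Hr Hi].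
    assert (G1 := RInt_eq_val _ _ 0 T _ _ ltac:(lra) Hr (bc_val_re om T M (a k) c)
      ltac:(intros r Hr'; cbv beta; rewrite (proj1 (Hform r ltac:(lra))); reflexivity)).
    assert (G2 := RInt_eq_val _ _ 0 T _ _ ltac:(lra) Hi (bc_val_im om T M (a k) c)
      ltac:(intros r Hr'; cbv beta; rewrite (proj1 (Hform r ltac:(lra))); reflexivity)).
    destruct (g k) as [g1 g2]. cbn [Cre Cim] in G1, G2. rewrite G1, G2.
    destruct (Cadd (Cmul (a k) (Pc om T M)) (Cmul c (Qc om T M))); reflexivity. }
  assert (Hc : c = bco lam om T a g k).
  { unfold bco. fold M. apply Cdiv_unique. apply Rgt_not_eq. exact (HQ k).
    rewrite Hg. destruct (a k) as [a1 a2], c as [c1 c2], (Pc om T M) as [p1 p2], (Qc om T M) as [q1 q2].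
    unfold Cmul, Cadd, Csub; cbn [Cre Cim]. f_equal; ring. }
  destruct (Hform t Ht) as [E1 E2]. rewrite E1, E2, Hc. unfold Usol, Vsol. fold M. split; reflexivity.
Qed.
End Char.

Lemma sin_nz om T : Cexpi (2 * om * T) <> Cone -> sin (om * T) <> 0.
Proof.
  intros H Hs. apply H. unfold Cexpi, Cone.
  replace (2 * om * T) with (2 * (om * T)) by ring.
  rewrite cos_2a_sin, sin_2a, Hs. f_equal; ring.
Qed.

Lemma sum_nonneg c l : infinite_sum c l -> (forall k, 0 <= c k) -> 0 <= l.
Proof.
  intros H Hp. destruct (series_comp c c l) as [l' [Hl' [H0 _]]]; auto.
  intro k; split; auto; lra. rewrite (uniqueness_sum c l l'); auto.
Qed.

Theorem theorem1 (lam : nat -> R)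
  (lam_pos : forall k, 0 < lam k)
  (lam_inf : forall M, exists N, forall k, (N <= k)%nat -> M < lam k)
  (T omega : R) (hT : 0 < T) (homega : omega <> 0)
  (hres : Cexpi (2 * omega * T) <> Cone) :
  exists c, 0 < c /\
    forall a g : Hseq, inHq lam 1 a -> inHq lam 2 g ->
      (exists u v, is_solution lam T omega a g u v) /\
      (forall u1 v1 u2 v2,
         is_solution lam T omega a g u1 v1 ->
         is_solution lam T omega a g u2 v2 ->
         forall t, 0 <= t <= T -> forall k, u1 t k = u2 t k) /\
      (forall u v, is_solution lam T omega a g u v ->
         forall t1 t2 t3, 0 <= t1 <= T -> 0 <= t2 <= T -> 0 <= t3 <= T ->
           Hnorm lam 0 (u t1) + Hnorm lam 1 (u t2) + Hnorm lam 0 (v t3)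
             <= c * (Hnorm lam 1 a + Hnorm lam 2 g)).
Proof.
  pose proof (sin_nz omega T hres) as Hs.
  destruct (K_unif lam omega T lam_pos lam_inf homega Hs) as [K [HK0 HK]].
  destruct (lam_lb lam lam_pos lam_inf) as [m [Hm0 Hm]].
  assert (HQ : forall k, 0 < Cmod2 (Qc omega T (sqrt (lam k)))).
  { intro k. apply Qc_nz; auto. apply sqrt_lt_R0; auto. }
  set (C0 := sqrt (2*(1+K)/m)). set (C1 := sqrt (2*(1+K))).
  exists (C0 + C1 + C1 + 1). split.
  { pose proof (sqrt_pos (2*(1+K)/m)). pose proof (sqrt_pos (2*(1+K))). unfold C0, C1. lra. }
  intros a g [A HA] [G HG]. rewrite Hq1 in HA. rewrite Hq2 in HG.
  assert (HA0 : 0 <= A).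
  { apply (sum_nonneg _ _ HA). intro k. pose proof (lam_pos k). pose proof (Cmod2_ge0 (a k)). nra. }
  assert (HG0 : 0 <= G).
  { apply (sum_nonneg _ _ HG). intro k. pose proof (pow2_ge_0 (lam k)). pose proof (Cmod2_ge0 (g k)). nra. }
  assert (Hsol : is_solution lam T omega a g (Usol lam omega T a g) (Vsol lam omega T a g)).
  { split; [|split; [|split]].
    - apply (Usol_W1 lam omega T a g lam_pos HQ K m HK0 HK Hm0 Hm A G HA HG).
    - apply Usol_wave; auto.
    - apply Usol_init.
    - apply Usol_bc_int; auto. }
  split; [|split].
  - eexists; eexists; exact Hsol.
  - intros u1 v1 u2 v2 H1 H2 t Ht k.
    rewrite (proj1 (char lam omega T a g u1 v1 lam_pos hT HQ H1 k t Ht)).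
    rewrite (proj1 (char lam omega T a g u2 v2 lam_pos hT HQ H2 k t Ht)). reflexivity.
  - intros u v H t1 t2 t3 Ht1 Ht2 Ht3.
    assert (E1 : u t1 = Usol lam omega T a g t1).
    { apply functional_extensionality; intro k. apply (char lam omega T a g u v lam_pos hT HQ H k t1 Ht1). }
    assert (E2 : u t2 = Usol lam omega T a g t2).
    { apply functional_extensionality; intro k. apply (char lam omega T a g u v lam_pos hT HQ H k t2 Ht2). }
    assert (E3 : v t3 = Vsol lam omega T a g t3).
    { apply functional_extensionality; intro k. apply (char lam omega T a g u v lam_pos hT HQ H k t3 Ht3). }
    rewrite E1, E2, E3.
    destruct (U_H0 lam omega T a g lam_pos HQ K m HK Hm0 Hm A G HA HG t1) as [_ B1].
    destruct (U_H1 lam omega T a g lam_pos HQ K HK A G HA HG t2) as [_ B2].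
    destruct (V_H0 lam omega T a g lam_pos HQ K HK A G HA HG t3) as [_ B3].
    rewrite (Hnorm_eq lam 1 a A) by (rewrite Hq1; exact HA).
    rewrite (Hnorm_eq lam 2 g G) by (rewrite Hq2; exact HG).
    assert (Hsq : sqrt (A + G) <= sqrt A + sqrt G).
    { rewrite <- (sqrt_pow2 (sqrt A + sqrt G)) by (pose proof (sqrt_pos A); pose proof (sqrt_pos G); lra).
      apply sqrt_le_1_alt.
      replace ((sqrt A + sqrt G)^2) with (sqrt A ^2 + sqrt G ^2 + 2 * sqrt A * sqrt G) by ring.
      rewrite <- !Rsqr_pow2, !Rsqr_sqrt by auto.
      pose proof (sqrt_pos A); pose proof (sqrt_pos G). nra. }
    assert (HC : forall C, 0 <= C -> sqrt (C * (A + G)) <= sqrt C * (sqrt A + sqrt G)).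
    { intros C HC. rewrite sqrt_mult by lra. apply Rmult_le_compat_l; auto. apply sqrt_pos. }
    assert (0 <= 2*(1+K)/m) by (apply Rmult_le_pos; [lra| left; apply Rinv_0_lt_compat; auto]).
    pose proof (HC _ H0). pose proof (HC (2*(1+K)) ltac:(lra)).
    fold C0 in H1. fold C1 in H2.
    pose proof (sqrt_pos A); pose proof (sqrt_pos G).
    lra.
Qed.
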